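(* Let $k\ge0$ be an integer and $a,b,c,d\in\mathbb{C}$ with $c,\ d+1,\ a+b-d+1\notin\{0,-1,-2,\dots\}$, $d-a+1,d-b+1\notin\{0,-1,-2,\dots\}$, and $\mathrm{Re}(d-a-b-k)>0$. Then $$\begin{aligned} {}_3F_2\!\left(\left.\begin{array}{c}a,\ b,\ c+k+1\\ d+1,\ c\end{array}\right|1\right) &=\frac{(-1)^k\,\Gamma(d+1)\,\Gamma(d-a-b-k)\,(a+b-d+1)_k}{c\,\Gamma(d-a+1)\,\Gamma(d-b+1)}\\ &\quad\times\Bigg\{\big[a(b-c)+c(d-b)\big]\,{}_3F_2\!\left(\left.\begin{array}{c}-k,\ a,\ b\\ c+1,\ a+b-d+1\end{array}\right|1\right)\\ &\qquad+\frac{ab\,(c-d)\,k}{(c+1)(a+b-d+1)}\,{}_3F_2\!\left(\left.\begin{array}{c}1-k,\ a+1,\ b+1\\ c+2,\ a+b-d+2\end{array}\right|1\right)\Bigg\}, \end{aligned}$$ where the two ${}_3F_2$ on the right are terminating (finite) sums (the second term is absent when $k=0$).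
   Context: ${}_3F_2(a_1,a_2,a_3;b_1,b_2;1)=\sum_{m\ge0}\frac{(a_1)_m(a_2)_m(a_3)_m}{m!\,(b_1)_m(b_2)_m}$ with $(\alpha)_m=\Gamma(\alpha+m)/\Gamma(\alpha)$; it converges absolutely if $\mathrm{Re}(b_1+b_2-a_1-a_2-a_3)>0$, and terminates after $m=N$ if some upper parameter equals $-N$ with $N\in\{0,1,2,\dots\}$. *)

(* Defs.v *)
From Stdlib Require Import Reals Arith ClassicalEpsilon.
Open Scope R_scope.

Record Cx : Type := mkC { Re : R; Im : R }.

Definition Cx0 : Cx := mkC 0 0.
Definition Cx1 : Cx := mkC 1 0.
Definition RtoC (x : R) : Cx := mkC x 0.
Definition Cnat (n : nat) : Cx := RtoC (INR n).
Definition Cadd (z w : Cx) : Cx := mkC (Re z + Re w) (Im z + Im w).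
Definition Copp (z : Cx) : Cx := mkC (- Re z) (- Im z).
Definition Csub (z w : Cx) : Cx := Cadd z (Copp w).
Definition Cmul (z w : Cx) : Cx :=
  mkC (Re z * Re w - Im z * Im w) (Re z * Im w + Im z * Re w).
Definition Cinv (z : Cx) : Cx :=
  let n := Re z * Re z + Im z * Im z in mkC (Re z / n) (- Im z / n).
Definition Cdiv (z w : Cx) : Cx := Cmul z (Cinv w).

Fixpoint Cpown (z : Cx) (n : nat) : Cx :=
  match n with O => Cx1 | S m => Cmul z (Cpown z m) end.

Definition Cexp (z : Cx) : Cx := mkC (exp (Re z) * cos (Im z)) (exp (Re z) * sin (Im z)).
Definition Rcpow (x : R) (z : Cx) : Cx := Cexp (Cmul z (RtoC (ln x))).

Fixpoint poch (alpha : Cx) (m : nat) : Cx :=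
  match m with O => Cx1 | S j => Cmul (poch alpha j) (Cadd alpha (Cnat j)) end.

Fixpoint Csum (f : nat -> Cx) (n : nat) : Cx :=
  match n with O => Cx0 | S m => Cadd (Csum f m) (f m) end.

Definition Ccv (u : nat -> Cx) (l : Cx) : Prop :=
  Un_cv (fun n => Re (u n)) (Re l) /\ Un_cv (fun n => Im (u n)) (Im l).

(* the limit of a sequence (0 if it does not converge; limits are unique) *)
Definition Clim (u : nat -> Cx) : Cx :=
  match excluded_middle_informative (exists l : Cx, Ccv u l) with
  | left H => proj1_sig (constructive_indefinite_description _ H)
  | right _ => Cx0
  end.

(* Gamma function, via Gauss' product formula
   Gamma z = lim_n n! n^z / (z (z+1) ... (z+n)),  z not in {0,-1,-2,...} *)
Definition Gamma (z : Cx) : Cx :=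
  Clim (fun n => Cdiv (Cmul (Cnat (Factorial.fact n)) (Rcpow (INR n) z)) (poch z (S n))).

Definition F32_term (a1 a2 a3 b1 b2 : Cx) (m : nat) : Cx :=
  Cdiv (Cmul (Cmul (poch a1 m) (poch a2 m)) (poch a3 m))
       (Cmul (Cmul (Cnat (Factorial.fact m)) (poch b1 m)) (poch b2 m)).

Definition F32_partial (a1 a2 a3 b1 b2 : Cx) (N : nat) : Cx :=
  Csum (F32_term a1 a2 a3 b1 b2) N.

Definition F32 (a1 a2 a3 b1 b2 : Cx) : Cx := Clim (F32_partial a1 a2 a3 b1 b2).

Definition notNonPosInt (z : Cx) : Prop := forall n : nat, z <> Copp (Cnat n).

(* Main.v *)
Require Import Defs.
From Stdlib Require Import Reals Lra Lia Field Ring ClassicalEpsilon.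
From Coquelicot Require Import Hierarchy Derive AutoDerive Rbar.
Open Scope R_scope.


Lemma Cx_ext : forall z w : Cx, Re z = Re w -> Im z = Im w -> z = w.
Proof. intros [a b] [c d]; simpl; intros -> ->; reflexivity. Qed.

Lemma Cx_ring_theory : ring_theory Cx0 Cx1 Cadd Cmul Csub Copp (@eq Cx).
Proof.
  constructor; intros; apply Cx_ext; unfold Cadd, Cmul, Csub, Copp, Cx0, Cx1; simpl; ring.
Qed.

Lemma Cnorm2_pos : forall z, z <> Cx0 -> Re z * Re z + Im z * Im z <> 0.
Proof.
  intros [x y] H; simpl; intro E. apply H.
  assert (x = 0) by nra. assert (y = 0) by nra. subst; reflexivity.
Qed.

Lemma Cx_field_theory : field_theory Cx0 Cx1 Cadd Cmul Csub Copp Cdiv Cinv (@eq Cx).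
Proof.
  constructor.
  - exact Cx_ring_theory.
  - intro H. injection H. lra.
  - reflexivity.
  - intros p Hp. apply Cnorm2_pos in Hp. destruct p as [x y]. simpl in *.
    apply Cx_ext; unfold Cmul, Cinv, Cx1; simpl; field; auto.
Qed.

Add Field Cxfield : Cx_field_theory.

Lemma Cnat_S : forall n, Cnat (S n) = Cadd (Cnat n) Cx1.
Proof. intro n. apply Cx_ext; unfold Cnat, RtoC, Cadd, Cx1; cbn [Re Im]; [rewrite S_INR|]; ring. Qed.
Lemma Cnat_0 : Cnat 0 = Cx0.
Proof. reflexivity. Qed.
Lemma Cnat_add : forall n m, Cnat (n + m) = Cadd (Cnat n) (Cnat m).
Proof. intros n m. apply Cx_ext; unfold Cnat, RtoC, Cadd; cbn [Re Im]; [rewrite plus_INR|]; ring. Qed.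
Lemma Cnat_mul : forall n m, Cnat (n * m) = Cmul (Cnat n) (Cnat m).
Proof. intros n m. apply Cx_ext; unfold Cnat, RtoC, Cmul; cbn [Re Im]; [rewrite mult_INR|]; ring. Qed.
Lemma RtoC_2 : RtoC 2 = Cadd Cx1 Cx1.
Proof. apply Cx_ext; simpl; ring. Qed.

Goal forall a b : Cx, b <> Cx0 -> Cmul (Cdiv a b) b = a.
Proof. intros. field. auto. Qed.

Lemma poch_S_left : forall x m, poch x (S m) = Cmul x (poch (Cadd x Cx1) m).
Proof.
  intros x m; induction m as [|m IH].
  - simpl. rewrite Cnat_0. ring.
  - change (poch x (S (S m))) with (Cmul (poch x (S m)) (Cadd x (Cnat (S m)))).
    rewrite IH. simpl poch. rewrite Cnat_S. ring.
Qed.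

Lemma poch_S : forall x m, poch x (S m) = Cmul (poch x m) (Cadd x (Cnat m)).
Proof. reflexivity. Qed.

Definition okp (x : Cx) (n : nat) := forall i, (i <= n)%nat -> Cadd x (Cnat i) <> Cx0.

Lemma poch_nz : forall x n m, okp x n -> (m <= S n)%nat -> poch x m <> Cx0.
Proof.
  intros x n m H; induction m as [|m IH]; intros Hm.
  - simpl. intro E; injection E; lra.
  - rewrite poch_S. intro E.
    assert (E2 : poch x m = Cx0 \/ Cadd x (Cnat m) = Cx0).
    { destruct (Req_dec (Re (poch x m) * Re (poch x m) + Im (poch x m) * Im (poch x m)) 0) as [Z|Z].
      - left. destruct (poch x m) as [p q]; simpl in *. apply Cx_ext; simpl; nra.
      - right. assert (HH: poch x m <> Cx0). { intro F; rewrite F in Z; simpl in Z; lra. }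
        rewrite <- (Cx_field_theory.(F_R).(Rmul_1_l) (Cadd x (Cnat m))).
        rewrite <- (Cx_field_theory.(Finv_l) _ HH). rewrite <- (Cx_field_theory.(F_R).(Rmul_assoc)).
        rewrite E. ring. }
    destruct E2 as [E2|E2]; [apply (IH ltac:(lia)) | apply (H m ltac:(lia))]; exact E2.
Qed.

Lemma okp_shift : forall x n, okp x (S n) -> okp (Cadd x Cx1) n.
Proof.
  intros x n H i Hi. replace (Cadd (Cadd x Cx1) (Cnat i)) with (Cadd x (Cnat (S i))).
  - apply H; lia.
  - rewrite Cnat_S; ring.
Qed.

Lemma okp_mono : forall x n m, okp x n -> (m <= n)%nat -> okp x m.
Proof. intros x n m H Hm i Hi. apply H; lia. Qed.

Lemma okp_0 : forall x n, okp x n -> x <> Cx0.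
Proof. intros x n H. specialize (H 0%nat ltac:(lia)). rewrite Cnat_0 in H.
  replace (Cadd x Cx0) with x in H by ring. exact H. Qed.

Lemma nnpi_okp : forall x n, notNonPosInt x -> okp x n.
Proof.
  intros x n H i _ E. apply (H i). rewrite <- (Cx_field_theory.(F_R).(Radd_0_l) (Copp (Cnat i))).
  rewrite <- E. ring.
Qed.

Lemma nnpi_shift : forall x, notNonPosInt x -> notNonPosInt (Cadd x Cx1).
Proof.
  intros x H n E. apply (H (S n)). rewrite Cnat_S.
  replace x with (Csub (Cadd x Cx1) Cx1) by ring. rewrite E. ring.
Qed.

Lemma nnpi_nz : forall x, notNonPosInt x -> x <> Cx0.
Proof. intros x H E. apply (H 0%nat). rewrite E. apply Cx_ext; simpl; ring. Qed.

Lemma Cnat_nz : forall n, Cnat (S n) <> Cx0.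
Proof. intros n E. assert (F : INR (S n) = 0) by (change (Re (Cnat (S n)) = Re Cx0); rewrite E; reflexivity).
  pose proof (pos_INR n). rewrite S_INR in F. lra. Qed.

Lemma fact_nz : forall n, Cnat (Factorial.fact n) <> Cx0.
Proof. intros n E. assert (F : INR (Factorial.fact n) = 0) by (change (Re (Cnat (Factorial.fact n)) = Re Cx0); rewrite E; reflexivity).
  pose proof (INR_fact_lt_0 n). lra. Qed.

Lemma Cnat_fact_S : forall n, Cnat (Factorial.fact (S n)) = Cmul (Cnat (S n)) (Cnat (Factorial.fact n)).
Proof. intro n. rewrite <- Cnat_mul. reflexivity. Qed.

Lemma poch_neg : forall n m, (n < m)%nat -> poch (Copp (Cnat n)) m = Cx0.
Proof.
  intros n m H. induction m as [|m IH]; [lia|].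
  rewrite poch_S. destruct (Nat.eq_dec n m) as [->|Hne].
  - replace (Cadd (Copp (Cnat m)) (Cnat m)) with Cx0 by ring. ring.
  - rewrite IH by lia. ring.
Qed.

Lemma Csum_ext : forall f g N, (forall j, (j < N)%nat -> f j = g j) -> Csum f N = Csum g N.
Proof. intros f g N H; induction N; simpl; [reflexivity|]. rewrite IHN by (intros; apply H; lia). rewrite H by lia. reflexivity. Qed.

Lemma Csum_shift : forall f N, Csum f (S N) = Cadd (f 0%nat) (Csum (fun j => f (S j)) N).
Proof. intros f N; induction N; simpl in *. - ring. - rewrite IHN. ring. Qed.

Lemma Csum_add : forall f g N, Csum (fun j => Cadd (f j) (g j)) N = Cadd (Csum f N) (Csum g N).
Proof. intros f g N; induction N; simpl; [ring|]. rewrite IHN; ring. Qed.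

Lemma Csum_scal : forall c f N, Csum (fun j => Cmul c (f j)) N = Cmul c (Csum f N).
Proof. intros c f N; induction N; simpl; [ring|]. rewrite IHN; ring. Qed.

Lemma Csum_opp : forall f N, Csum (fun j => Copp (f j)) N = Copp (Csum f N).
Proof. intros f N; induction N; simpl; [ring|]. rewrite IHN; ring. Qed.

Lemma Csum_zero_tail : forall f N M, (forall j, (N <= j)%nat -> f j = Cx0) -> (N <= M)%nat -> Csum f M = Csum f N.
Proof.
  intros f N M H HM. induction HM; [reflexivity|]. simpl. rewrite IHHM, H by lia. ring.
Qed.

Lemma mul_nz_r : forall x y, Cmul x y <> Cx0 -> y <> Cx0.
Proof. intros x y H E; apply H; rewrite E; ring. Qed.
Lemma mul_nz_l : forall x y, Cmul x y <> Cx0 -> x <> Cx0.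
Proof. intros x y H E; apply H; rewrite E; ring. Qed.

Lemma poch_shift_nz : forall x n j, okp x n -> (j <= n)%nat -> poch (Cadd x Cx1) j <> Cx0.
Proof. intros x n j H Hj. apply (mul_nz_r x). rewrite <- poch_S_left. apply (poch_nz x n); auto; lia. Qed.

Lemma pascal_term : forall n a b c f j, okp c n -> okp f n -> (j <= n)%nat ->
  F32_term (Copp (Cnat (S n))) a b c f (S j) =
  Csub (F32_term (Copp (Cnat n)) a b c f (S j))
       (Cmul (Cdiv (Cmul a b) (Cmul c f))
             (F32_term (Copp (Cnat n)) (Cadd a Cx1) (Cadd b Cx1) (Cadd c Cx1) (Cadd f Cx1) j)).
Proof.
  intros n a b c f j Hc Hf Hj.
  pose proof (poch_shift_nz c n j Hc Hj). pose proof (poch_shift_nz f n j Hf Hj).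
  pose proof (okp_0 c n Hc). pose proof (okp_0 f n Hf). pose proof (fact_nz j).
  pose proof (Cnat_nz j). rewrite Cnat_S in H4.
  unfold F32_term. rewrite (poch_S_left (Copp (Cnat (S n)))).
  replace (Cadd (Copp (Cnat (S n))) Cx1) with (Copp (Cnat n)) by (rewrite Cnat_S; ring).
  rewrite (poch_S (Copp (Cnat n))), !(poch_S_left a), !(poch_S_left b), !(poch_S_left c), !(poch_S_left f).
  rewrite Cnat_fact_S, Cnat_S, Cnat_S.
  field. repeat split; auto.
Qed.

Definition Sfin (n : nat) (a b c f : Cx) := F32_partial (Copp (Cnat n)) a b c f (S n).

Lemma term0 : forall a1 a2 a3 b1 b2, F32_term a1 a2 a3 b1 b2 0 = Cx1.
Proof. intros. unfold F32_term. simpl poch. change (Factorial.fact 0) with 1%nat.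
  replace (Cnat 1) with Cx1 by (rewrite Cnat_S, Cnat_0; ring). field. intro E. injection E. lra. Qed.

Lemma Sfin_rec : forall n a b c f, okp c n -> okp f n ->
  Sfin (S n) a b c f = Csub (Sfin n a b c f)
     (Cmul (Cdiv (Cmul a b) (Cmul c f)) (Sfin n (Cadd a Cx1) (Cadd b Cx1) (Cadd c Cx1) (Cadd f Cx1))).
Proof.
  intros n a b c f Hc Hf. unfold Sfin, F32_partial.
  rewrite Csum_shift. rewrite (Csum_ext _ (fun j => Csub (F32_term (Copp (Cnat n)) a b c f (S j))
       (Cmul (Cdiv (Cmul a b) (Cmul c f))
             (F32_term (Copp (Cnat n)) (Cadd a Cx1) (Cadd b Cx1) (Cadd c Cx1) (Cadd f Cx1) j)))).
  2:{ intros j Hj. apply pascal_term; auto; lia. }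
  unfold Csub. rewrite Csum_add, Csum_opp, Csum_scal.
  set (F := F32_term (Copp (Cnat n)) a b c f).
  assert (E1 : Csum (fun j => F (S j)) (S n) = Csub (Csum F (S n)) (F 0%nat)).
  { assert (E2 : Csum F (S (S n)) = Csum F (S n)).
    { change (Csum F (S (S n))) with (Cadd (Csum F (S n)) (F (S n))).
      assert (Z : F (S n) = Cx0). { unfold F, F32_term. rewrite (poch_neg n (S n)) by lia. unfold Cdiv. ring. }
      rewrite Z. ring. }
    rewrite <- E2, (Csum_shift F (S n)). ring. }
  rewrite E1. unfold F. rewrite !term0. ring.
Qed.

Lemma fin_id : forall k a b c f, okp c k -> okp f k ->
  Sfin (S k) a b c f =
  Csub (Cmul (Cdiv (Csub (Cmul c f) (Cmul a b)) (Cmul c f)) (Sfin k a b (Cadd c Cx1) (Cadd f Cx1)))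
       (Cmul (Cdiv (Cmul (Cmul (Cmul a b) (Csub (Cadd c f) (Cadd a b))) (Cnat k))
                   (Cmul (Cmul (Cmul c f) (Cadd c Cx1)) (Cadd f Cx1)))
             (Csum (F32_term (Csub Cx1 (Cnat k)) (Cadd a Cx1) (Cadd b Cx1) (Cadd c (RtoC 2)) (Cadd f (RtoC 2))) k)).
Proof.
  intros k a b c f Hc Hf.
  pose proof (okp_0 c k Hc) as c0. pose proof (okp_0 f k Hf) as f0.
  rewrite Sfin_rec by auto. unfold Sfin, F32_partial.
  set (U := F32_term (Copp (Cnat k)) a b (Cadd c Cx1) (Cadd f Cx1)).
  set (V := F32_term (Csub Cx1 (Cnat k)) (Cadd a Cx1) (Cadd b Cx1) (Cadd c (RtoC 2)) (Cadd f (RtoC 2))).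
  assert (T : forall j, (j < S k)%nat ->
     Csub (F32_term (Copp (Cnat k)) a b c f j)
       (Cmul (Cdiv (Cmul a b) (Cmul c f)) (F32_term (Copp (Cnat k)) (Cadd a Cx1) (Cadd b Cx1) (Cadd c Cx1) (Cadd f Cx1) j))
     = Cadd (Cmul (Cdiv (Csub (Cmul c f) (Cmul a b)) (Cmul c f)) (U j))
            (Cmul (U j) (Cdiv (Cmul (Cnat j) (Csub (Cadd c f) (Cadd a b))) (Cmul c f)))).
  { intros j Hj. pose proof (poch_shift_nz c k j Hc ltac:(lia)). pose proof (poch_shift_nz f k j Hf ltac:(lia)).
    pose proof (fact_nz j). pose proof (Hc j ltac:(lia)). pose proof (Hf j ltac:(lia)).
    assert (Ea: Cmul a (poch (Cadd a Cx1) j) = Cmul (poch a j) (Cadd a (Cnat j))) by (rewrite <- poch_S_left; reflexivity).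
    assert (Eb: Cmul b (poch (Cadd b Cx1) j) = Cmul (poch b j) (Cadd b (Cnat j))) by (rewrite <- poch_S_left; reflexivity).
    assert (Ec: poch c j = Cdiv (Cmul c (poch (Cadd c Cx1) j)) (Cadd c (Cnat j))).
    { rewrite <- poch_S_left, poch_S. field. auto. }
    assert (Ef: poch f j = Cdiv (Cmul f (poch (Cadd f Cx1) j)) (Cadd f (Cnat j))).
    { rewrite <- poch_S_left, poch_S. field. auto. }
    assert (E2 : Cmul (Cdiv (Cmul a b) (Cmul c f)) (F32_term (Copp (Cnat k)) (Cadd a Cx1) (Cadd b Cx1) (Cadd c Cx1) (Cadd f Cx1) j)
      = Cdiv (Cmul (Cmul (poch (Copp (Cnat k)) j) (Cmul a (poch (Cadd a Cx1) j))) (Cmul b (poch (Cadd b Cx1) j)))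
             (Cmul (Cmul (Cmul (Cnat (Factorial.fact j)) (poch (Cadd c Cx1) j)) (poch (Cadd f Cx1) j)) (Cmul c f))).
    { unfold F32_term. field. repeat split; auto. }
    rewrite E2, Ea, Eb. unfold U, F32_term. rewrite Ec, Ef. field. repeat split; auto. }
  match goal with |- Csub (Csum ?F ?N) (Cmul ?K (Csum ?G ?N)) = _ =>
    replace (Csub (Csum F N) (Cmul K (Csum G N))) with (Csum (fun j => Csub (F j) (Cmul K (G j))) N)
    by (unfold Csub; rewrite Csum_add, Csum_opp, Csum_scal; reflexivity) end.
  rewrite (Csum_ext _ _ _ T). rewrite Csum_add, Csum_scal.
  rewrite (Csum_shift (fun j => Cmul (U j) _)). cbv beta. rewrite Cnat_0.
  replace (Cmul (U 0%nat) (Cdiv (Cmul Cx0 (Csub (Cadd c f) (Cadd a b))) (Cmul c f))) with Cx0 by (unfold Cdiv; ring).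
  destruct k as [|k].
  - simpl Csum. ring.
  - rewrite (Csum_ext (fun j => Cmul (U (S j)) (Cdiv (Cmul (Cnat (S j)) (Csub (Cadd c f) (Cadd a b))) (Cmul c f))) (fun i => Cmul (Copp (Cdiv (Cmul (Cmul (Cmul a b) (Csub (Cadd c f) (Cadd a b))) (Cnat (S k)))
                   (Cmul (Cmul (Cmul c f) (Cadd c Cx1)) (Cadd f Cx1)))) (V i))).
    + rewrite Csum_scal. ring.
    + intros i Hi. pose proof (poch_shift_nz c (S k) (S i) Hc ltac:(lia)) as P1.
      pose proof (poch_shift_nz f (S k) (S i) Hf ltac:(lia)) as P2.
      rewrite poch_S_left in P1, P2.
      pose proof (mul_nz_l _ _ P1). pose proof (mul_nz_r _ _ P1).
      pose proof (mul_nz_l _ _ P2). pose proof (mul_nz_r _ _ P2).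
      pose proof (fact_nz i). pose proof (Cnat_nz i).
      unfold U, V, F32_term. rewrite !(poch_S_left _ i). rewrite Cnat_fact_S.
      replace (Cadd (Copp (Cnat (S k))) Cx1) with (Csub Cx1 (Cnat (S k))) by ring.
      replace (Cadd (Cadd c Cx1) Cx1) with (Cadd c (RtoC 2)) by (rewrite RtoC_2; ring).
      replace (Cadd (Cadd f Cx1) Cx1) with (Cadd f (RtoC 2)) in * by (rewrite RtoC_2; ring).
      replace (Cadd (Cadd c Cx1) Cx1) with (Cadd c (RtoC 2)) in * by (rewrite RtoC_2; ring).
      field. repeat split; auto.
Qed.


Definition Hterm (a b c d : Cx) (n m : nat) := F32_term a b (Cadd c (Cnat n)) (Cadd d Cx1) c m.
Definition h2 (a b C : Cx) (m : nat) := Cdiv (Cmul (poch a m) (poch b m)) (Cmul (Cnat (Factorial.fact m)) (poch C m)).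

Lemma nnpi_poch_nz : forall x m, notNonPosInt x -> poch x m <> Cx0.
Proof. intros x m H. apply (poch_nz x m m); [apply nnpi_okp; auto| lia]. Qed.

Lemma Hterm_rec : forall a b c d n m, notNonPosInt c -> notNonPosInt (Cadd d Cx1) ->
  Hterm a b c d (S n) (S m) = Cadd (Hterm a b c d n (S m))
    (Cmul (Cdiv (Cmul a b) (Cmul (Cadd d Cx1) c)) (Hterm (Cadd a Cx1) (Cadd b Cx1) (Cadd c Cx1) (Cadd d Cx1) n m)).
Proof.
  intros a b c d n m Hc Hd.
  pose proof (nnpi_poch_nz _ (S m) Hc) as P1. pose proof (nnpi_poch_nz _ (S m) Hd) as P2.
  rewrite poch_S_left in P1, P2.
  pose proof (mul_nz_l _ _ P1). pose proof (mul_nz_r _ _ P1).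
  pose proof (mul_nz_l _ _ P2). pose proof (mul_nz_r _ _ P2).
  pose proof (fact_nz m). pose proof (Cnat_nz m).
  unfold Hterm, F32_term.
  replace (Cadd c (Cnat (S n))) with (Cadd (Cadd c (Cnat n)) Cx1) by (rewrite Cnat_S; ring).
  replace (Cadd (Cadd c Cx1) (Cnat n)) with (Cadd (Cadd c (Cnat n)) Cx1) by ring.
  rewrite (poch_S (Cadd (Cadd c (Cnat n)) Cx1)).
  rewrite !(poch_S_left _ m). rewrite Cnat_fact_S. rewrite Cnat_S in *.
  field. repeat split; auto.
Qed.

Lemma Hterm_0 : forall a b c d m, notNonPosInt c -> notNonPosInt (Cadd d Cx1) ->
  Hterm a b c d 0 m = h2 a b (Cadd d Cx1) m.
Proof.
  intros a b c d m Hc Hd. pose proof (nnpi_poch_nz c m Hc). pose proof (nnpi_poch_nz _ m Hd).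
  pose proof (fact_nz m). unfold Hterm, h2, F32_term.
  rewrite Cnat_0. replace (Cadd c Cx0) with c by ring. field. repeat split; auto.
Qed.

Lemma Rcv_const : forall c, Un_cv (fun _ => c) c.
Proof. intros c eps He. exists 0%nat. intros. unfold Rdist. rewrite Rminus_diag, Rabs_R0. lra. Qed.

Lemma Rcv_inv : forall u l, l <> 0 -> Un_cv u l -> Un_cv (fun n => / u n) (/ l).
Proof.
  intros u l Hl H. apply (continuity_seq Rinv u l); auto.
  apply (continuity_pt_inv (fun x => x) l); auto. apply derivable_continuous_pt, derivable_pt_id.
Qed.

Lemma Rcv_ext_ev : forall u v l, (exists N, forall n, (N <= n)%nat -> u n = v n) -> Un_cv u l -> Un_cv v l.
Proof.
  intros u v l [N HN] H eps He. destruct (H eps He) as [M HM]. exists (max N M). intros n Hn.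
  rewrite <- HN by lia. apply HM; lia.
Qed.

Lemma Rcv_unique : forall u l1 l2, Un_cv u l1 -> Un_cv u l2 -> l1 = l2.
Proof. intros; eapply UL_sequence; eauto. Qed.

Lemma Rcv_shift : forall u l, Un_cv (fun n => u (S n)) l -> Un_cv u l.
Proof. intros u l H eps He. destruct (H eps He) as [N HN]. exists (S N). intros n Hn.
  destruct n; [lia|]. apply HN; lia. Qed.

Lemma Rcv_shift' : forall u l, Un_cv u l -> Un_cv (fun n => u (S n)) l.
Proof. intros u l H eps He. destruct (H eps He) as [N HN]. exists N. intros n Hn. apply HN; lia. Qed.

Lemma Rcv_le : forall u l B, Un_cv u l -> (exists N, forall n, (N <= n)%nat -> u n <= B) -> l <= B.
Proof.
  intros u l B H [N HN]. destruct (Rle_dec l B) as [|Hlt]; auto. exfalso.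
  destruct (H (l - B)) as [M HM]; [lra|]. specialize (HM (max N M) ltac:(lia)). specialize (HN (max N M) ltac:(lia)).
  unfold Rdist in HM. apply Rabs_def2 in HM. lra.
Qed.

Lemma Rcv_0_le : forall u v, Un_cv v 0 -> (exists N, forall n, (N <= n)%nat -> Rabs (u n) <= v n) -> Un_cv u 0.
Proof.
  intros u v H [N HN] eps He. destruct (H eps He) as [M HM]. exists (max N M). intros n Hn.
  specialize (HM n ltac:(lia)). specialize (HN n ltac:(lia)). unfold Rdist in *.
  rewrite Rminus_0_r in *. apply Rabs_def2 in HM. pose proof (Rabs_pos (u n)). lra.
Qed.

Lemma Ccv_ext_ev : forall u v l, (exists N, forall n, (N <= n)%nat -> u n = v n) -> Ccv u l -> Ccv v l.
Proof.
  intros u v l [N HN] [H1 H2]. split; eapply Rcv_ext_ev; eauto; exists N; intros n Hn; rewrite HN; auto.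
Qed.

Lemma Ccv_ext : forall u v l, (forall n, u n = v n) -> Ccv u l -> Ccv v l.
Proof. intros u v l H. apply Ccv_ext_ev. exists 0%nat; auto. Qed.

Lemma Ccv_const : forall c, Ccv (fun _ => c) c.
Proof. intro c; split; apply Rcv_const. Qed.

Lemma Ccv_add : forall u v l1 l2, Ccv u l1 -> Ccv v l2 -> Ccv (fun n => Cadd (u n) (v n)) (Cadd l1 l2).
Proof. intros u v l1 l2 [A1 A2] [B1 B2]; split; simpl; apply CV_plus; auto. Qed.

Lemma Ccv_opp : forall u l, Ccv u l -> Ccv (fun n => Copp (u n)) (Copp l).
Proof. intros u l [A1 A2]; split; simpl; apply CV_opp; auto. Qed.

Lemma Ccv_sub : forall u v l1 l2, Ccv u l1 -> Ccv v l2 -> Ccv (fun n => Csub (u n) (v n)) (Csub l1 l2).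
Proof. intros. unfold Csub. apply Ccv_add; auto. apply Ccv_opp; auto. Qed.

Lemma Ccv_mul : forall u v l1 l2, Ccv u l1 -> Ccv v l2 -> Ccv (fun n => Cmul (u n) (v n)) (Cmul l1 l2).
Proof.
  intros u v l1 l2 [A1 A2] [B1 B2]; split; simpl.
  - apply CV_minus; apply CV_mult; auto.
  - apply CV_plus; apply CV_mult; auto.
Qed.

Lemma Ccv_inv : forall u l, l <> Cx0 -> Ccv u l -> Ccv (fun n => Cinv (u n)) (Cinv l).
Proof.
  intros u l Hl [A1 A2]. pose proof (Cnorm2_pos l Hl) as Hn.
  assert (N : Un_cv (fun n => Re (u n) * Re (u n) + Im (u n) * Im (u n)) (Re l * Re l + Im l * Im l)).
  { apply CV_plus; apply CV_mult; auto. }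
  pose proof (Rcv_inv _ _ Hn N) as I.
  split; simpl; unfold Rdiv.
  - apply CV_mult; auto.
  - apply CV_mult; auto. apply CV_opp; auto.
Qed.

Lemma Ccv_div : forall u v l1 l2, l2 <> Cx0 -> Ccv u l1 -> Ccv v l2 -> Ccv (fun n => Cdiv (u n) (v n)) (Cdiv l1 l2).
Proof. intros. unfold Cdiv. apply Ccv_mul; auto. apply Ccv_inv; auto. Qed.

Lemma Ccv_unique : forall u l1 l2, Ccv u l1 -> Ccv u l2 -> l1 = l2.
Proof. intros u l1 l2 [A1 A2] [B1 B2]. apply Cx_ext; eapply Rcv_unique; eauto. Qed.

Lemma Clim_eq : forall u l, Ccv u l -> Clim u = l.
Proof.
  intros u l H. unfold Clim. destruct (excluded_middle_informative _) as [E|E].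
  - destruct (constructive_indefinite_description _ E) as [l' Hl']. simpl. eapply Ccv_unique; eauto.
  - exfalso. apply E. exists l; auto.
Qed.

Lemma Ccv_shift : forall u l, Ccv (fun n => u (S n)) l -> Ccv u l.
Proof. intros u l [A B]; split; apply Rcv_shift; auto. Qed.
Lemma Ccv_shift' : forall u l, Ccv u l -> Ccv (fun n => u (S n)) l.
Proof. intros u l [A B]; split; [apply (Rcv_shift' (fun n => Re (u n))) | apply (Rcv_shift' (fun n => Im (u n)))]; auto. Qed.

Lemma Ccv_eventually_const : forall u N, (forall n, (N <= n)%nat -> u n = u N) -> Ccv u (u N).
Proof. intros u N H. eapply Ccv_ext_ev; [|apply Ccv_const]. exists N. intros n Hn. symmetry. apply H; auto. Qed.

Lemma mvt_quad : forall (f f' : R -> R) (u K : R), 0 <= K ->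
  (forall c, Rmin 0 u <= c <= Rmax 0 u -> derivable_pt_lim f c (f' c)) ->
  (forall c, Rmin 0 u <= c <= Rmax 0 u -> Rabs (f' c) <= K * Rabs c) ->
  Rabs (f u - f 0) <= K * (u * u).
Proof.
  intros f f' u K HK Hd Hb. destruct (MVT_abs f f' 0 u Hd) as [c [E Hc]].
  rewrite E. rewrite Rminus_0_r. specialize (Hb c Hc).
  assert (Rabs c <= Rabs u).
  { unfold Rmin, Rmax in Hc. destruct (Rle_dec 0 u); apply Rabs_le; split_Rabs; lra. }
  assert (0 <= K * Rabs c) by (pose proof (Rabs_pos (f' c)); lra).
  replace (u * u) with (Rabs u * Rabs u) by (rewrite <- Rabs_mult; apply Rabs_pos_eq; nra).
  pose proof (Rabs_pos u). pose proof (Rabs_pos c).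
  apply Rle_trans with (K * Rabs c * Rabs u); [apply Rmult_le_compat_r; auto|].
  assert (K * Rabs c <= K * Rabs u) by (apply Rmult_le_compat_l; auto). nra.
Qed.

Lemma ln1p_bound : forall u, Rabs u <= /2 -> Rabs (ln (1 + u) - u) <= 2 * (u * u).
Proof.
  intros u Hu.
  assert (H := mvt_quad (fun s => ln (1 + s) - s) (fun s => / (1 + s) - 1) u 2 ltac:(lra)).
  cbv beta in H. replace (ln (1 + 0) - 0) with 0 in H by (rewrite Rplus_0_r, ln_1; ring).
  rewrite Rminus_0_r in H. apply H.
  - intros c Hc. assert (Rabs c <= Rabs u).
    { unfold Rmin, Rmax in Hc. destruct (Rle_dec 0 u); apply Rabs_le; split_Rabs; lra. }
    apply is_derive_Reals. auto_derive. split_Rabs; lra. field. split_Rabs; lra.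
  - intros c Hc. assert (Rabs c <= Rabs u).
    { unfold Rmin, Rmax in Hc. destruct (Rle_dec 0 u); apply Rabs_le; split_Rabs; lra. }
    assert (0 < 1 + c) by (split_Rabs; lra).
    replace (/ (1 + c) - 1) with (- c / (1 + c)) by (field; lra).
    unfold Rdiv. rewrite Rabs_mult, Rabs_Ropp, Rabs_inv.
    assert (/2 <= Rabs (1 + c)) by (split_Rabs; lra).
    assert (0 < / Rabs (1+c) <= 2).
    { split. apply Rinv_0_lt_compat; lra. replace 2 with (/ / 2) by field. apply Rinv_le_contravar; lra. }
    pose proof (Rabs_pos c). nra.
Qed.

Lemma atan_bound2 : forall t, Rabs t <= 1 -> Rabs (atan t - t) <= t * t.
Proof.
  intros t Ht.
  assert (H := mvt_quad (fun s => atan s - s) (fun s => / (1 + s^2) - 1) t 1 ltac:(lra)).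
  cbv beta in H. replace (atan 0 - 0) with 0 in H by (rewrite atan_0; ring).
  rewrite Rminus_0_r, Rmult_1_l in H. apply H.
  - intros c Hc. apply derivable_pt_lim_minus. apply derivable_pt_lim_atan. apply derivable_pt_lim_id.
  - intros c Hc. assert (Rabs c <= Rabs t).
    { unfold Rmin, Rmax in Hc. destruct (Rle_dec 0 t); apply Rabs_le; split_Rabs; lra. }
    assert (0 < 1 + c^2) by nra.
    replace (/ (1 + c^2) - 1) with (- (c * c) / (1 + c^2)) by (field; lra).
    unfold Rdiv. rewrite Rabs_mult, Rabs_Ropp, Rabs_inv, (Rabs_pos_eq (c*c)) by nra.
    rewrite (Rabs_pos_eq (1 + c^2)) by lra.
    assert (c * c / (1 + c^2) <= Rabs c).
    { apply Rmult_le_reg_r with (1 + c^2); auto. unfold Rdiv. rewrite Rmult_assoc, Rinv_l by lra.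
      assert (c * c <= Rabs c) by (split_Rabs; nra). pose proof (Rabs_pos c). nra. }
    rewrite Rmult_1_l. exact H2.
Qed.

Fixpoint rsum (f : nat -> R) (n : nat) : R :=
  match n with O => 0 | S m => rsum f m + f m end.

Lemma rsum_ext : forall f g N, (forall j, (j < N)%nat -> f j = g j) -> rsum f N = rsum g N.
Proof. intros f g N H; induction N; simpl; [reflexivity|]. rewrite IHN by (intros; apply H; lia). rewrite H by lia. reflexivity. Qed.

Lemma rsum_nonneg_mono : forall f N M, (forall j, 0 <= f j) -> (N <= M)%nat -> rsum f N <= rsum f M.
Proof. intros f N M H HM. induction HM; simpl; [lra|]. specialize (H m). lra. Qed.

Lemma rsum_abs_diff : forall f N M, (N <= M)%nat ->
  Rabs (rsum f M - rsum f N) <= rsum (fun j => Rabs (f j)) M - rsum (fun j => Rabs (f j)) N.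
Proof.
  intros f N M HM. induction HM; simpl.
  - rewrite Rminus_diag, Rabs_R0. lra.
  - replace (rsum f m + f m - rsum f N) with ((rsum f m - rsum f N) + f m) by ring.
    eapply Rle_trans; [apply Rabs_triang|]. lra.
Qed.

Lemma abs_series_cv : forall f B, (forall N, rsum (fun j => Rabs (f j)) N <= B) ->
  { l | Un_cv (rsum f) l }.
Proof.
  intros f B HB. apply Stdlib.Reals.Rcomplete.R_complete.
  destruct (growing_cv (rsum (fun j => Rabs (f j)))) as [L HL].
  - intro n. simpl. pose proof (Rabs_pos (f n)). lra.
  - exists B. intros x [n ->]. apply HB.
  - pose proof (CV_Cauchy _ (exist _ L HL)) as C.
    intros eps He. destruct (C eps He) as [N HN]. exists N. intros n m Hn Hm.
    unfold Rdist in *. destruct (Nat.le_gt_cases n m) as [Hnm|Hnm].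
    + rewrite Rabs_minus_sym. eapply Rle_lt_trans; [apply rsum_abs_diff; auto|].
      specialize (HN m n Hm Hn). eapply Rle_lt_trans; [apply Rle_abs|]. exact HN.
    + eapply Rle_lt_trans; [apply rsum_abs_diff; lia|].
      specialize (HN n m Hn Hm). eapply Rle_lt_trans; [apply Rle_abs|]. exact HN.
Qed.

Lemma inv_sq_sum : forall N, rsum (fun j => / (INR (S j) * INR (S j))) (S N) <= 2 - / INR (S N).
Proof.
  induction N.
  - simpl. lra.
  - change (rsum (fun j => / (INR (S j) * INR (S j))) (S (S N))) with
      (rsum (fun j => / (INR (S j) * INR (S j))) (S N) + / (INR (S (S N)) * INR (S (S N)))).
    assert (E : INR (S (S N)) = INR (S N) + 1) by (apply S_INR).
    rewrite E. assert (1 <= INR (S N)) by (apply (le_INR 1); lia).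
    assert (/ ((INR (S N) + 1) * (INR (S N) + 1)) <= / (INR (S N)) - / (INR (S N) + 1)).
    { replace (/ INR (S N) - / (INR (S N) + 1)) with (/ (INR (S N) * (INR (S N) + 1))) by (field; lra).
      apply Rinv_le_contravar; nra. }
    lra.
Qed.

Definition O2 (f : nat -> R) := exists C N, forall n, (N <= n)%nat -> Rabs (f n) <= C / (INR (S n) * INR (S n)).

Lemma O2_bounded : forall f, O2 f -> exists B, forall N, rsum (fun j => Rabs (f j)) N <= B.
Proof.
  intros f [C [N0 H]].
  assert (HC : 0 <= C).
  { specialize (H N0 ltac:(lia)). pose proof (Rabs_pos (f N0)).
    assert (0 < INR (S N0)) by (apply lt_0_INR; lia).
    destruct (Rle_dec 0 C); auto. exfalso. assert (C / (INR (S N0) * INR (S N0)) < 0).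
    { unfold Rdiv. apply Rmult_neg_pos; [lra|]. apply Rinv_0_lt_compat; nra. } lra. }
  exists (rsum (fun j => Rabs (f j)) N0 + 2 * C). intro N.
  destruct (Nat.le_gt_cases N N0) as [HN|HN].
  - pose proof (rsum_nonneg_mono (fun j => Rabs (f j)) N N0 (fun j => Rabs_pos _) HN). lra.
  - assert (forall k, rsum (fun j => Rabs (f j)) (N0 + k) <= rsum (fun j => Rabs (f j)) N0 + C * rsum (fun j => / (INR (S j) * INR (S j))) (N0 + k)
             - C * rsum (fun j => / (INR (S j) * INR (S j))) N0).
    { induction k. - rewrite Nat.add_0_r. lra.
      - rewrite Nat.add_succ_r. cbn [rsum].
        specialize (H (N0 + k)%nat ltac:(lia)). unfold Rdiv in H. lra. }
    replace N with (N0 + (N - N0))%nat by lia. specialize (H0 (N - N0)%nat).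
    pose proof (inv_sq_sum (N0 + (N - N0))).
    assert (rsum (fun j => / (INR (S j) * INR (S j))) (N0 + (N - N0)) <= rsum (fun j => / (INR (S j) * INR (S j))) (S (N0 + (N - N0)))).
    { apply rsum_nonneg_mono; [|lia]. intro j. apply Rlt_le, Rinv_0_lt_compat. pose proof (lt_0_INR (S j) ltac:(lia)). nra. }
    assert (0 <= rsum (fun j => / (INR (S j) * INR (S j))) N0).
    { replace 0 with (rsum (fun j => / (INR (S j) * INR (S j))) 0) by reflexivity.
      apply rsum_nonneg_mono; [|lia]. intro j. apply Rlt_le, Rinv_0_lt_compat. pose proof (lt_0_INR (S j) ltac:(lia)). nra. }
    assert (0 < / INR (S (N0 + (N - N0)))) by (apply Rinv_0_lt_compat, lt_0_INR; lia).
    nra.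
Qed.

Lemma O2_intro : forall f C N, (1 <= N)%nat -> (forall n, (N <= n)%nat -> Rabs (f n) <= C / (INR n * INR n)) -> O2 f.
Proof.
  intros f C N HN H. exists (4 * C), N. intros n Hn. specialize (H n Hn).
  assert (1 <= INR n) by (apply (le_INR 1); lia). rewrite S_INR.
  assert (0 <= C). { pose proof (Rabs_pos (f n)). assert (0 < / (INR n * INR n)) by (apply Rinv_0_lt_compat; nra).
    unfold Rdiv in H. destruct (Rle_dec 0 C); auto. nra. }
  eapply Rle_trans; [exact H|].
  replace (4 * C / ((INR n + 1) * (INR n + 1))) with (C * / ((INR n + 1) * (INR n + 1) / 4)) by (field; lra).
  unfold Rdiv. apply Rmult_le_compat_l; auto. apply Rinv_le_contravar; nra.
Qed.

Lemma O2_cv : forall f, O2 f -> exists l, Un_cv (rsum f) l.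
Proof.
  intros f H. destruct (O2_bounded f H) as [B HB]. destruct (abs_series_cv f B HB) as [l Hl]. exists l; auto.
Qed.

Lemma Rabs_div' : forall a b, Rabs (a / b) = Rabs a / Rabs b.
Proof. intros. unfold Rdiv. rewrite Rabs_mult, Rabs_inv. reflexivity. Qed.

Lemma Rdiv_le_0' : forall a b, 0 <= a -> 0 < b -> 0 <= a / b.
Proof. intros. unfold Rdiv. apply Rmult_le_pos; auto. apply Rlt_le, Rinv_0_lt_compat; auto. Qed.

Definition pol (r t : R) : Cx := mkC (r * cos t) (r * sin t).

Lemma pol_mul : forall r1 t1 r2 t2, Cmul (pol r1 t1) (pol r2 t2) = pol (r1 * r2) (t1 + t2).
Proof. intros. apply Cx_ext; unfold pol, Cmul; cbn [Re Im]; rewrite ?cos_plus, ?sin_plus; ring. Qed.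

Lemma pol_inv : forall r t, r <> 0 -> Cinv (pol r t) = pol (/ r) (- t).
Proof.
  intros r t Hr. pose proof (sin2_cos2 t) as E. unfold Rsqr in E.
  assert (D : r * cos t * (r * cos t) + r * sin t * (r * sin t) = r * r).
  { transitivity (r * r * (sin t * sin t + cos t * cos t)); [ring | rewrite E; ring]. }
  apply Cx_ext; unfold pol, Cinv; cbn [Re Im]; rewrite ?cos_neg, ?sin_neg; rewrite D; field; auto.
Qed.

Lemma pol_nz : forall r t, r <> 0 -> pol r t <> Cx0.
Proof.
  intros r t Hr E. pose proof (sin2_cos2 t) as S. unfold Rsqr in S.
  assert (A : r * cos t = 0) by (change (Re (pol r t) = Re Cx0); rewrite E; reflexivity).
  assert (B : r * sin t = 0) by (change (Im (pol r t) = Im Cx0); rewrite E; reflexivity).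
  assert (r * r = 0) by (replace (r * r) with (r * r * (sin t * sin t + cos t * cos t)) by (rewrite S; ring); nra).
  apply Hr. nra.
Qed.

Lemma pol_0 : pol 1 0 = Cx1.
Proof. apply Cx_ext; unfold pol, Cx1; cbn [Re Im]; rewrite ?cos_0, ?sin_0; ring. Qed.

Lemma Rcpow_pol : forall x z, 0 < x -> Rcpow x z = pol (exp (Re z * ln x)) (Im z * ln x).
Proof.
  intros x z Hx. unfold Rcpow, Cexp, pol, Cmul, RtoC. cbn [Re Im].
  replace (Re z * ln x - Im z * 0) with (Re z * ln x) by ring.
  replace (Re z * 0 + Im z * ln x) with (Im z * ln x) by ring. reflexivity.
Qed.

Lemma Cnat_pol : forall n, (0 < n)%nat -> Cnat n = pol (exp (ln (INR n))) 0.
Proof.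
  intros n Hn. rewrite exp_ln by (apply lt_0_INR; lia).
  apply Cx_ext; unfold pol, Cnat, RtoC; cbn [Re Im]; rewrite ?cos_0, ?sin_0; ring.
Qed.

Lemma atan_pol : forall p q, 0 < p -> mkC p q = pol (sqrt (p * p + q * q)) (atan (q / p)).
Proof.
  intros p q Hp.
  assert (E : sqrt (p * p + q * q) = p * sqrt (1 + (q / p)²)).
  { replace (p * p + q * q) with ((p * p) * (1 + (q / p)²)) by (unfold Rsqr; field; lra).
    rewrite sqrt_mult_alt by nra. rewrite sqrt_square by lra. reflexivity. }
  assert (0 < sqrt (1 + (q / p)²)) by (apply sqrt_lt_R0; pose proof (Rle_0_sqr (q/p)); lra).
  apply Cx_ext; unfold pol; cbn [Re Im]; rewrite E, ?cos_atan, ?sin_atan; field; lra.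
Qed.

Lemma sqrt_exp : forall Q, 0 < Q -> sqrt Q = exp (ln Q / 2).
Proof.
  intros Q HQ. assert (0 < sqrt Q) by (apply sqrt_lt_R0; auto).
  rewrite <- (exp_ln (sqrt Q)) at 1 by auto. f_equal.
  assert (ln Q = ln (sqrt Q * sqrt Q)) by (rewrite sqrt_sqrt; lra).
  rewrite ln_mult in H0 by auto. lra.
Qed.

Definition Gs (n : nat) (z : Cx) := Cdiv (Cmul (Cnat (Factorial.fact n)) (Rcpow (INR n) z)) (poch z (S n)).

Lemma Gamma_Gs : forall z, Gamma z = Clim (fun n => Gs n z).
Proof. reflexivity. Qed.

Definition al (z : Cx) (n : nat) := ln (INR (S n)) + Re z * (ln (INR (S n)) - ln (INR n))
   - ln ((Re z + INR (S n)) * (Re z + INR (S n)) + Im z * Im z) / 2.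
Definition be (z : Cx) (n : nat) := Im z * (ln (INR (S n)) - ln (INR n)) - atan (Im z / (Re z + INR (S n))).

Lemma Rcpow_nz : forall x z, 0 < x -> Rcpow x z <> Cx0.
Proof. intros. rewrite Rcpow_pol by auto. apply pol_nz. pose proof (exp_pos (Re z * ln x)). lra. Qed.

Lemma repos_nz : forall z n, 0 < Re z -> Cadd z (Cnat n) <> Cx0.
Proof. intros z n H E. assert (Re z + INR n = 0) by (change (Re (Cadd z (Cnat n)) = Re Cx0); rewrite E; reflexivity).
  pose proof (pos_INR n). lra. Qed.

Lemma repos_okp : forall z n, 0 < Re z -> okp z n.
Proof. intros z n H i _. apply repos_nz; auto. Qed.

Lemma G_step : forall z n, 0 < Re z -> (1 <= n)%nat ->
  Gs (S n) z = Cmul (Gs n z) (pol (exp (al z n)) (be z n)).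
Proof.
  intros z n Hz Hn.
  assert (Hn0 : 0 < INR n) by (apply lt_0_INR; lia).
  assert (HS0 : 0 < INR (S n)) by (apply lt_0_INR; lia).
  assert (E1 : Gs (S n) z = Cmul (Gs n z) (Cmul (Cmul (Cnat (S n)) (Cmul (Rcpow (INR (S n)) z) (Cinv (Rcpow (INR n) z))))
                                          (Cinv (Cadd z (Cnat (S n)))))).
  { unfold Gs. rewrite Cnat_fact_S. rewrite (poch_S z (S n)).
    pose proof (poch_nz z n (S n) (repos_okp z n Hz) ltac:(lia)).
    pose proof (Rcpow_nz (INR n) z Hn0). pose proof (repos_nz z (S n) Hz). pose proof (fact_nz n).
    field. repeat split; auto. }
  rewrite E1. f_equal.
  assert (Ez : Cadd z (Cnat (S n)) = mkC (Re z + INR (S n)) (Im z)).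
  { apply Cx_ext; unfold Cadd, Cnat, RtoC; cbn [Re Im]; ring. }
  rewrite Ez, atan_pol by lra.
  rewrite (Cnat_pol (S n)) by lia. rewrite !Rcpow_pol by auto.
  rewrite pol_inv by (pose proof (exp_pos (Re z * ln (INR n))); lra).
  set (Q := (Re z + INR (S n)) * (Re z + INR (S n)) + Im z * Im z).
  assert (HQ : 0 < Q) by (unfold Q; nra).
  rewrite pol_inv by (pose proof (sqrt_lt_R0 Q HQ); lra).
  rewrite sqrt_exp by auto. rewrite <- !exp_Ropp, !pol_mul, <- !exp_plus.
  unfold al, be. fold Q. f_equal; [f_equal|]; ring.
Qed.

Lemma G_prod : forall z n, 0 < Re z ->
  Gs (S n) z = Cmul (Gs 1 z) (pol (exp (rsum (fun i => al z (S i)) n)) (rsum (fun i => be z (S i)) n)).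
Proof.
  intros z n Hz. induction n.
  - simpl rsum. rewrite exp_0, pol_0. ring.
  - rewrite G_step by (auto; lia). rewrite IHn.
    cbn [rsum]. rewrite exp_plus, <- pol_mul. ring.
Qed.

Lemma al_id : forall z n, 0 < Re z -> (1 <= n)%nat ->
  let x := Re z in let y := Im z in let N := INR n in let M := N + 1 in
  let v := (2 * x * M + (x * x + y * y)) / (M * M) in
  al z n = x / (N * M) - (x * x + y * y) / (2 * (M * M)) + x * (ln (1 + / N) - / N) - (ln (1 + v) - v) / 2.
Proof.
  intros z n Hz Hn x y N M v.
  assert (Hx : 0 < x) by exact Hz.
  assert (HN : 1 <= N) by (apply (le_INR 1); lia).

  assert (HM : INR (S n) = M) by (unfold M, N; apply S_INR).
  unfold al. rewrite HM. fold x y.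
  assert (E1 : ln M = ln N + ln (1 + / N)).
  { rewrite <- ln_mult. f_equal. unfold M; field; intro; lra. lra. apply Rplus_lt_0_compat; [lra|]. apply Rinv_0_lt_compat; lra. }
  assert (Hv : 0 < 1 + v).
  { unfold v. replace (1 + (2 * x * M + (x * x + y * y)) / (M * M)) with (((x + M) * (x + M) + y * y) / (M * M)) by (unfold M; field; intro; lra).
    apply Rdiv_lt_0_compat; unfold M; nra. }
  assert (E2 : ln ((x + M) * (x + M) + y * y) = ln M + ln M + ln (1 + v)).
  { rewrite <- !ln_mult; try (unfold M; nra); auto. f_equal. unfold v, M. field. intro; lra. }
  rewrite E2, E1. fold N. unfold v, M. field; try (repeat split; intro; lra).
Qed.

Lemma al_bound : forall z m, 0 < Re z -> (1 <= m)%nat ->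
  let x := Re z in let y := Im z in let K := 2 * Rabs x + (x * x + y * y) in
  2 <= INR m -> 2 * K <= INR m ->
  Rabs (al z m) <= (3 * Rabs x + (x * x + y * y) / 2 + K * K) / (INR m * INR m).
Proof.
  intros z m Hz Hm x y K H2 HK.
  rewrite al_id by auto. cbv zeta. fold x y. set (N := INR m) in *.
  set (M := N + 1). set (v := (2 * x * M + (x * x + y * y)) / ((N + 1) * (N + 1))).
  assert (Hx : 0 < x) by exact Hz.
  assert (HM1 : M = N + 1) by reflexivity. clearbody M. subst M.
  assert (HK0 : 0 <= K) by (unfold K; pose proof (Rabs_pos x); nra).
  assert (HvK : Rabs v <= K / N).
  { unfold v. rewrite Rabs_div'. rewrite (Rabs_pos_eq (_ * _)) by nra.
    rewrite Rabs_pos_eq by nra. unfold K. rewrite Rabs_pos_eq by lra.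
    apply Rmult_le_reg_r with (N * ((N + 1) * (N + 1))). nra.
    unfold Rdiv. field_simplify; try lra. nra. }
  assert (HKN : K / N <= / 2).
  { apply Rmult_le_reg_r with N; [lra|]. unfold Rdiv. rewrite Rmult_assoc, Rinv_l by lra. lra. }
  pose proof (ln1p_bound v ltac:(lra)) as L2.
  assert (HN2 : Rabs (/ N) <= / 2) by (rewrite Rabs_pos_eq by (apply Rlt_le, Rinv_0_lt_compat; lra); apply Rinv_le_contravar; lra).
  pose proof (ln1p_bound (/ N) HN2) as L1.
  assert (v * v <= K * K / (N * N)).
  { replace (K * K / (N * N)) with ((K / N) * (K / N)) by (field; lra).
    rewrite <- (Rabs_pos_eq (K/N)) by (apply Rdiv_le_0'; lra).
    replace (v * v) with (Rabs v * Rabs v) by (rewrite <- Rabs_mult; apply Rabs_pos_eq; nra).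
    rewrite (Rabs_pos_eq (K/N)) by (apply Rdiv_le_0'; lra). pose proof (Rabs_pos v). nra. }
  assert (A1 : Rabs (x / (N * (N + 1))) <= Rabs x / (N * N)).
  { rewrite Rabs_div'. rewrite (Rabs_pos_eq (N * (N + 1))) by nra.
    unfold Rdiv. apply Rmult_le_compat_l; [apply Rabs_pos|]. apply Rinv_le_contravar; nra. }
  assert (A2 : Rabs ((x * x + y * y) / (2 * ((N + 1) * (N + 1)))) <= (x * x + y * y) / 2 / (N * N)).
  { rewrite Rabs_pos_eq by (apply Rdiv_le_0'; nra).
    unfold Rdiv. rewrite Rmult_assoc. apply Rmult_le_compat_l; [nra|]. rewrite <- Rinv_mult.
    apply Rinv_le_contravar; nra. }
  assert (A3 : Rabs (x * (ln (1 + / N) - / N)) <= 2 * Rabs x / (N * N)).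
  { rewrite Rabs_mult. replace (2 * Rabs x / (N * N)) with (Rabs x * (2 * (/ N * / N))) by (field; lra).
    apply Rmult_le_compat_l; [apply Rabs_pos|]. exact L1. }
  assert (A4 : Rabs ((ln (1 + v) - v) / 2) <= K * K / (N * N)).
  { unfold Rdiv at 1. rewrite Rabs_mult, (Rabs_pos_eq (/2)) by lra. lra. }
  eapply Rle_trans. { eapply Rle_trans; [apply Rabs_triang|]. apply Rplus_le_compat_r.
    eapply Rle_trans; [apply Rabs_triang|]. apply Rplus_le_compat_r.
    unfold Rminus. eapply Rle_trans; [apply Rabs_triang|]. rewrite Rabs_Ropp. apply Rle_refl. }
  rewrite Rabs_Ropp.
  replace ((3 * Rabs x + (x * x + y * y) / 2 + K * K) / (N * N)) with
    (Rabs x / (N * N) + (x * x + y * y) / 2 / (N * N) + 2 * Rabs x / (N * N) + K * K / (N * N)) by (field; lra).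
  fold v. lra.
Qed.

Lemma al_O2 : forall z, 0 < Re z -> O2 (fun i => al z (S i)).
Proof.
  intros z Hz. set (x := Re z). set (y := Im z).
  set (K := 2 * Rabs x + (x * x + y * y)).
  destruct (INR_unbounded (2 * K + 2)) as [N0 HN0].
  apply (O2_intro (fun i => al z (S i)) (3 * Rabs x + (x * x + y * y) / 2 + K * K) (S N0)).
  - lia.
  - intros n Hn.
    assert (INR N0 <= INR n) by (apply le_INR; lia).
    assert (1 <= INR n) by (apply (le_INR 1); lia).
    assert (HKp : 0 <= K) by (unfold K; pose proof (Rabs_pos x); nra).
    assert (INR n <= INR (S n)) by (apply le_INR; lia).
    pose proof (al_bound z (S n) Hz ltac:(lia)) as B. cbv zeta in B. fold x y K in B.
    eapply Rle_trans; [apply B; lra|].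
    assert (0 <= 3 * Rabs x + (x * x + y * y) / 2 + K * K) by (pose proof (Rabs_pos x); nra).
    unfold Rdiv. apply Rmult_le_compat_l; auto. apply Rinv_le_contravar; nra.
Qed.

Lemma be_bound : forall z m, 0 < Re z -> (1 <= m)%nat ->
  let x := Re z in let y := Im z in
  2 <= INR m -> Rabs y <= INR m ->
  Rabs (be z m) <= (Rabs y * (x + 1) + 2 * Rabs y + y * y) / (INR m * INR m).
Proof.
  intros z m Hz Hm x y H2 Hy.
  assert (Hx : 0 < x) by exact Hz.
  assert (HS : INR (S m) = INR m + 1) by apply S_INR.
  unfold be. rewrite HS. fold x y. set (N := INR m) in *.
  set (t := y / (x + (N + 1))).
  assert (Ht : Rabs t <= Rabs y / N).
  { unfold t. rewrite Rabs_div', (Rabs_pos_eq (x + (N+1))) by lra. unfold Rdiv.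
    apply Rmult_le_compat_l; [apply Rabs_pos|]. apply Rinv_le_contravar; lra. }
  assert (Ht1 : Rabs t <= 1).
  { eapply Rle_trans; [exact Ht|]. apply Rmult_le_reg_r with N; [lra|]. unfold Rdiv.
    rewrite Rmult_assoc, Rinv_l by lra. lra. }
  pose proof (atan_bound2 t Ht1) as T.
  assert (HN2 : Rabs (/ N) <= / 2) by (rewrite Rabs_pos_eq by (apply Rlt_le, Rinv_0_lt_compat; lra); apply Rinv_le_contravar; lra).
  pose proof (ln1p_bound (/ N) HN2) as L1.
  assert (E : y * ln (1 + / N) - atan t = y * (x + 1) / (N * (x + (N + 1))) + y * (ln (1 + / N) - / N) - (atan t - t)).
  { unfold t. field. split; lra. }
  assert (EL : ln (N + 1) - ln N = ln (1 + / N)).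
  { replace (N + 1) with (N * (1 + / N)) by (field; lra). rewrite ln_mult. ring. lra.
    apply Rplus_lt_0_compat; [lra|]. apply Rinv_0_lt_compat; lra. }
  rewrite EL. fold t. rewrite E.
  assert (A1 : Rabs (y * (x + 1) / (N * (x + (N + 1)))) <= Rabs y * (x + 1) / (N * N)).
  { rewrite Rabs_div', Rabs_mult, (Rabs_pos_eq (x+1)), (Rabs_pos_eq (N * _)) by nra.
    unfold Rdiv. apply Rmult_le_compat_l; [pose proof (Rabs_pos y); nra|]. apply Rinv_le_contravar; nra. }
  assert (A2 : Rabs (y * (ln (1 + / N) - / N)) <= 2 * Rabs y / (N * N)).
  { rewrite Rabs_mult. replace (2 * Rabs y / (N * N)) with (Rabs y * (2 * (/ N * / N))) by (field; lra).
    apply Rmult_le_compat_l; [apply Rabs_pos|]. exact L1. }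
  assert (A3 : t * t <= y * y / (N * N)).
  { replace (t * t) with (Rabs t * Rabs t) by (rewrite <- Rabs_mult; apply Rabs_pos_eq; nra).
    assert (Eyy : Rabs y * Rabs y = y * y) by (rewrite <- Rabs_mult; apply Rabs_pos_eq; nra).
    replace (y * y / (N * N)) with ((Rabs y / N) * (Rabs y / N)) by (rewrite <- Eyy; field; lra).
    pose proof (Rabs_pos t). nra. }
  eapply Rle_trans. { unfold Rminus. eapply Rle_trans; [apply Rabs_triang|]. rewrite Rabs_Ropp.
    apply Rplus_le_compat_r. apply Rabs_triang. }
  replace ((Rabs y * (x + 1) + 2 * Rabs y + y * y) / (N * N)) with
    (Rabs y * (x + 1) / (N * N) + 2 * Rabs y / (N * N) + y * y / (N * N)) by (field; lra).
  unfold Rminus in *. lra.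
Qed.

Lemma be_O2 : forall z, 0 < Re z -> O2 (fun i => be z (S i)).
Proof.
  intros z Hz. set (x := Re z). set (y := Im z).
  destruct (INR_unbounded (Rabs y + 2)) as [N0 HN0].
  apply (O2_intro (fun i => be z (S i)) (Rabs y * (x + 1) + 2 * Rabs y + y * y) (S N0)).
  - lia.
  - intros n Hn.
    assert (INR N0 <= INR n) by (apply le_INR; lia).
    assert (1 <= INR n) by (apply (le_INR 1); lia).
    assert (INR n <= INR (S n)) by (apply le_INR; lia).
    assert (Hx : 0 < x) by exact Hz.
    pose proof (be_bound z (S n) Hz ltac:(lia)) as B. cbv zeta in B. fold x y in B.
    eapply Rle_trans; [apply B; pose proof (Rabs_pos y); lra|].
    assert (0 <= Rabs y * (x + 1) + 2 * Rabs y + y * y) by (pose proof (Rabs_pos y); nra).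
    unfold Rdiv. apply Rmult_le_compat_l; auto. apply Rinv_le_contravar; nra.
Qed.

Lemma Rcv_comp : forall f u l, (forall x, derivable_pt f x) -> Un_cv u l -> Un_cv (fun n => f (u n)) (f l).
Proof. intros f u l Hf H. apply continuity_seq; auto. apply derivable_continuous_pt. apply Hf. Qed.

Lemma pol_cv : forall a b A B, Un_cv a A -> Un_cv b B ->
  Ccv (fun n => pol (exp (a n)) (b n)) (pol (exp A) B).
Proof.
  intros a b A B Ha Hb. split; unfold pol; cbn [Re Im]; apply CV_mult.
  - apply (Rcv_comp exp); auto. apply derivable_pt_exp.
  - apply (Rcv_comp cos); auto. apply derivable_pt_cos.
  - apply (Rcv_comp exp); auto. apply derivable_pt_exp.
  - apply (Rcv_comp sin); auto. apply derivable_pt_sin.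
Qed.

Lemma Cmul_nz : forall u v, u <> Cx0 -> v <> Cx0 -> Cmul u v <> Cx0.
Proof.
  intros u v Hu Hv E. apply Hv.
  replace v with (Cmul (Cinv u) (Cmul u v)) by (field; auto). rewrite E. ring.
Qed.

Lemma Cdiv_nz : forall u v, u <> Cx0 -> v <> Cx0 -> Cdiv u v <> Cx0.
Proof.
  intros u v Hu Hv E. apply Hu. replace u with (Cmul (Cdiv u v) v) by (field; auto). rewrite E. ring.
Qed.

Lemma Cx1_nz : Cx1 <> Cx0.
Proof. intro E. injection E. lra. Qed.

Lemma Gamma_pos_cv : forall z, 0 < Re z -> exists L, L <> Cx0 /\ Ccv (fun n => Gs n z) L.
Proof.
  intros z Hz.
  destruct (O2_cv _ (al_O2 z Hz)) as [A HA]. destruct (O2_cv _ (be_O2 z Hz)) as [B HB].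
  exists (Cmul (Gs 1 z) (pol (exp A) B)). split.
  - apply Cmul_nz.
    + unfold Gs. apply Cdiv_nz.
      * apply Cmul_nz. apply fact_nz. apply Rcpow_nz. simpl; lra.
      * apply (poch_nz z 1). apply repos_okp; auto. lia.
    + apply pol_nz. pose proof (exp_pos A). lra.
  - apply Ccv_shift. eapply Ccv_ext. { intro n. symmetry. apply G_prod; auto. }
    apply Ccv_mul. apply Ccv_const. apply pol_cv; auto.
Qed.

Lemma Rcv_inv_n : Un_cv (fun n => / INR n) 0.
Proof.
  intros eps He. destruct (INR_unbounded (/ eps)) as [N HN]. exists (S N). intros n Hn.
  unfold Rdist. rewrite Rminus_0_r.
  assert (INR N < INR n) by (apply lt_INR; lia).
  assert (0 < INR n) by (pose proof (pos_INR N); lra).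
  rewrite Rabs_pos_eq by (apply Rlt_le, Rinv_0_lt_compat; lra).
  assert (0 < / eps) by (apply Rinv_0_lt_compat; lra).
  replace eps with (/ / eps) by (field; lra). apply Rinv_lt_contravar; nra.
Qed.

Lemma Ccv_inv_n : forall c, Ccv (fun n => Cmul c (Cinv (Cnat n))) Cx0.
Proof.
  intro c. replace Cx0 with (Cmul c Cx0) by ring. apply Ccv_mul; [apply Ccv_const|].
  eapply Ccv_ext_ev.
  { exists 1%nat. intros n Hn. symmetry. instantiate (1 := fun n => RtoC (/ INR n)).
    assert (0 < INR n) by (apply lt_0_INR; lia).
    apply Cx_ext; unfold Cinv, Cnat, RtoC; cbn [Re Im]; field; lra. }
  split; cbn [Re Im RtoC Cx0]. apply Rcv_inv_n. apply Rcv_const.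
Qed.

Lemma Gs_shift : forall z n, (1 <= n)%nat -> notNonPosInt z ->
  Gs n z = Cmul (Gs n (Cadd z Cx1)) (Cdiv (Cadd Cx1 (Cmul (Cadd z Cx1) (Cinv (Cnat n)))) z).
Proof.
  intros z n Hn Hz.
  assert (Hn0 : 0 < INR n) by (apply lt_0_INR; lia).
  assert (Cnat n <> Cx0) by (destruct n; [lia|apply Cnat_nz]).
  pose proof (nnpi_nz z Hz).
  pose proof (nnpi_poch_nz (Cadd z Cx1) n (nnpi_shift z Hz)).
  assert (Cadd (Cadd z Cx1) (Cnat n) <> Cx0).
  { pose proof (nnpi_poch_nz (Cadd z Cx1) (S n) (nnpi_shift z Hz)). rewrite poch_S in H2. eapply mul_nz_r; eauto. }
  pose proof (fact_nz n). pose proof (Rcpow_nz (INR n) z Hn0).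
  assert (E : Rcpow (INR n) (Cadd z Cx1) = Cmul (Rcpow (INR n) z) (Cnat n)).
  { rewrite !Rcpow_pol by auto. rewrite (Cnat_pol n) by lia. rewrite pol_mul, <- exp_plus.
    unfold Cadd, Cx1. cbn [Re Im]. f_equal; [f_equal|]; ring. }
  unfold Gs. rewrite E, (poch_S (Cadd z Cx1) n), poch_S_left.
  field. repeat split; auto.
Qed.

Lemma Gamma_shift_cv : forall z L, notNonPosInt z -> L <> Cx0 -> Ccv (fun n => Gs n (Cadd z Cx1)) L ->
  Ccv (fun n => Gs n z) (Cdiv L z) /\ Cdiv L z <> Cx0.
Proof.
  intros z L Hz HL H. split.
  - eapply Ccv_ext_ev. { exists 1%nat. intros n Hn. symmetry. apply Gs_shift; auto. }
    replace (Cdiv L z) with (Cmul L (Cdiv (Cadd Cx1 Cx0) z)) by (field; apply nnpi_nz; auto).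
    apply Ccv_mul; auto. apply Ccv_div. apply nnpi_nz; auto.
    apply Ccv_add. apply Ccv_const. apply Ccv_inv_n. apply Ccv_const.
  - apply Cdiv_nz; auto. apply nnpi_nz; auto.
Qed.

Lemma Gamma_cv_aux : forall k z, notNonPosInt z -> 0 < Re z + INR k ->
  exists L, L <> Cx0 /\ Ccv (fun n => Gs n z) L.
Proof.
  induction k; intros z Hz Hk.
  - simpl in Hk. apply Gamma_pos_cv. lra.
  - destruct (Rlt_dec 0 (Re z)) as [P|P]. { apply Gamma_pos_cv; auto. }
    destruct (IHk (Cadd z Cx1) (nnpi_shift z Hz)) as [L [HL HC]].
    { rewrite S_INR in Hk. unfold Cadd, Cx1; cbn [Re]. lra. }
    exists (Cdiv L z). destruct (Gamma_shift_cv z L Hz HL HC); auto.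
Qed.

Lemma Gamma_spec : forall z, notNonPosInt z -> Ccv (fun n => Gs n z) (Gamma z) /\ Gamma z <> Cx0.
Proof.
  intros z Hz. destruct (INR_unbounded (- Re z)) as [k Hk].
  destruct (Gamma_cv_aux k z Hz ltac:(lra)) as [L [HL HC]].
  rewrite Gamma_Gs, (Clim_eq _ _ HC). auto.
Qed.

Lemma Gamma_succ : forall z, notNonPosInt z -> Gamma (Cadd z Cx1) = Cmul z (Gamma z).
Proof.
  intros z Hz. destruct (Gamma_spec (Cadd z Cx1) (nnpi_shift z Hz)) as [H1 H2].
  destruct (Gamma_shift_cv z _ Hz H2 H1) as [H3 _].
  destruct (Gamma_spec z Hz) as [H4 _].
  pose proof (Ccv_unique _ _ _ H3 H4) as E. rewrite <- E. field. apply nnpi_nz; auto.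
Qed.

Lemma nnpi_add : forall z n, notNonPosInt z -> notNonPosInt (Cadd z (Cnat n)).
Proof.
  intros z n Hz. induction n.
  - rewrite Cnat_0. replace (Cadd z Cx0) with z by ring. auto.
  - rewrite Cnat_S. replace (Cadd z (Cadd (Cnat n) Cx1)) with (Cadd (Cadd z (Cnat n)) Cx1) by ring.
    apply nnpi_shift; auto.
Qed.

Lemma Gamma_add : forall z n, notNonPosInt z -> Gamma (Cadd z (Cnat n)) = Cmul (poch z n) (Gamma z).
Proof.
  intros z n Hz. induction n.
  - rewrite Cnat_0. replace (Cadd z Cx0) with z by ring. simpl. ring.
  - rewrite Cnat_S. replace (Cadd z (Cadd (Cnat n) Cx1)) with (Cadd (Cadd z (Cnat n)) Cx1) by ring.
    rewrite Gamma_succ by (apply nnpi_add; auto). rewrite IHn, poch_S. ring.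
Qed.

Lemma repos_nnpi : forall z, 0 < Re z -> notNonPosInt z.
Proof. intros z Hz n E. assert (Re z = - INR n) by (rewrite E; reflexivity). pose proof (pos_INR n). lra. Qed.

Definition Cnorm (z : Cx) := sqrt (Re z * Re z + Im z * Im z).

Lemma Cnorm_pos : forall z, 0 <= Cnorm z.
Proof. intro; apply sqrt_pos. Qed.

Lemma Cnorm_mul : forall z w, Cnorm (Cmul z w) = Cnorm z * Cnorm w.
Proof.
  intros. unfold Cnorm. rewrite <- sqrt_mult_alt by nra. f_equal. unfold Cmul; cbn [Re Im]. ring.
Qed.

Lemma Cnorm_inv : forall z, z <> Cx0 -> Cnorm (Cinv z) = / Cnorm z.
Proof.
  intros z Hz. pose proof (Cnorm2_pos z Hz). assert (0 < Re z * Re z + Im z * Im z) by nra.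
  unfold Cnorm. rewrite <- sqrt_inv. f_equal. unfold Cinv; cbn [Re Im]. field. auto.
Qed.

Lemma Cnorm_div : forall z w, w <> Cx0 -> Cnorm (Cdiv z w) = Cnorm z / Cnorm w.
Proof. intros. unfold Cdiv. rewrite Cnorm_mul, Cnorm_inv by auto. reflexivity. Qed.

Lemma Re_le_Cnorm : forall z, Rabs (Re z) <= Cnorm z.
Proof.
  intro z. unfold Cnorm. rewrite <- sqrt_Rsqr_abs. apply sqrt_le_1_alt. unfold Rsqr. nra.
Qed.

Lemma Im_le_Cnorm : forall z, Rabs (Im z) <= Cnorm z.
Proof.
  intro z. unfold Cnorm. rewrite <- sqrt_Rsqr_abs. apply sqrt_le_1_alt. unfold Rsqr. nra.
Qed.

Lemma Cnorm_Cnat : forall n, Cnorm (Cnat n) = INR n.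
Proof.
  intro n. unfold Cnorm, Cnat, RtoC; cbn [Re Im]. replace (INR n * INR n + 0 * 0) with (INR n * INR n) by ring.
  apply sqrt_square. apply pos_INR.
Qed.

Lemma Cnorm_upper : forall w eps, 0 < eps -> Im w * Im w <= 2 * eps * Re w -> Cnorm w <= Re w + eps.
Proof.
  intros w eps He H. assert (0 <= Re w) by nra. unfold Cnorm.
  rewrite <- (sqrt_square (Re w + eps)) by lra. apply sqrt_le_1_alt. nra.
Qed.

Lemma Cnorm_add_nat_mono : forall w n m, 0 <= Re w + INR n -> (n <= m)%nat ->
  Cnorm (Cadd w (Cnat n)) <= Cnorm (Cadd w (Cnat m)).
Proof.
  intros w n m H Hm. assert (INR n <= INR m) by (apply le_INR; auto).
  unfold Cnorm, Cadd, Cnat, RtoC; cbn [Re Im]. apply sqrt_le_1_alt. nra.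
Qed.

Lemma Cnorm_ge_Re : forall w, Re w <= Cnorm w.
Proof. intro w. pose proof (Re_le_Cnorm w). pose proof (Rle_abs (Re w)). lra. Qed.

Lemma Re_Csum : forall f N, Re (Csum f N) = rsum (fun j => Re (f j)) N.
Proof. intros f N; induction N; simpl; [reflexivity|]. rewrite IHN. reflexivity. Qed.
Lemma Im_Csum : forall f N, Im (Csum f N) = rsum (fun j => Im (f j)) N.
Proof. intros f N; induction N; simpl; [reflexivity|]. rewrite IHN. reflexivity. Qed.

Lemma rsum_le : forall f g N, (forall j, f j <= g j) -> rsum f N <= rsum g N.
Proof. intros f g N H; induction N; simpl; [lra|]. specialize (H N). lra. Qed.

Lemma Csum_abs_cv : forall f B, (forall N, rsum (fun j => Cnorm (f j)) N <= B) -> exists S, Ccv (Csum f) S.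
Proof.
  intros f B H.
  destruct (abs_series_cv (fun j => Re (f j)) B) as [l1 H1].
  { intro N. eapply Rle_trans; [|apply (H N)]. apply rsum_le. intro; apply Re_le_Cnorm. }
  destruct (abs_series_cv (fun j => Im (f j)) B) as [l2 H2].
  { intro N. eapply Rle_trans; [|apply (H N)]. apply rsum_le. intro; apply Im_le_Cnorm. }
  exists (mkC l1 l2). split; cbn [Re Im].
  - eapply Rcv_ext_ev; [|exact H1]. exists 0%nat. intros. rewrite Re_Csum. reflexivity.
  - eapply Rcv_ext_ev; [|exact H2]. exists 0%nat. intros. rewrite Im_Csum. reflexivity.
Qed.

Lemma raabe : forall (w : nat -> R) (d : R) (M : nat), 0 < d -> (forall m, 0 <= w m) ->
  (forall m, (M <= m)%nat -> w (S m) * (INR m + 1 + d) <= INR m * w m) ->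
  (exists B, forall N, rsum w N <= B) /\ Un_cv (fun m => INR m * w m) 0.
Proof.
  intros w d M Hd Hw H.
  assert (Sum : forall k, d * (rsum w (S (M + k)) - rsum w (S M)) + INR (M + k) * w (M + k)%nat <= INR M * w M).
  { induction k as [|k IH].
    - rewrite !Nat.add_0_r. lra.
    - replace (M + S k)%nat with (S (M + k))%nat by lia.
      change (rsum w (S (S (M + k)))) with (rsum w (S (M + k)) + w (S (M + k))).
      specialize (H (M + k)%nat ltac:(lia)). rewrite S_INR. nra. }
  assert (Bd : forall N, rsum w N <= rsum w (S M) + INR M * w M / d).
  { intro N. destruct (Nat.le_gt_cases N (S M)) as [HN|HN].
    - pose proof (rsum_nonneg_mono w N (S M) Hw HN). pose proof (Hw M). pose proof (pos_INR M).
      assert (0 <= INR M * w M / d) by (apply Rdiv_le_0'; [nra|lra]). lra.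
    - specialize (Sum (N - S M)%nat). replace (S (M + (N - S M)))%nat with N in Sum by lia.
      pose proof (Hw (M + (N - S M))%nat). pose proof (pos_INR (M + (N - S M))).
      apply Rmult_le_reg_l with d; auto. unfold Rdiv. rewrite Rmult_plus_distr_l.
      replace (d * (INR M * w M * / d)) with (INR M * w M) by (field; lra). nra. }
  split; [eexists; exact Bd|].
  set (u := fun m => INR m * w m).
  assert (Mono : forall p q, (M <= p)%nat -> (p <= q)%nat -> u q <= u p).
  { intros p q Hp Hq. induction Hq; [lra|]. unfold u in *. specialize (H m ltac:(lia)).
    rewrite S_INR. pose proof (Hw (S m)). nra. }
  assert (Half : forall N, (M <= N)%nat -> (1 <= N)%nat -> u (2 * N)%nat <= 2 * (rsum w (2 * N) - rsum w N)).
  { intros N HM H1.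
    assert (K : forall k, (k <= N)%nat -> INR k * u (2 * N)%nat / (2 * INR N) <= rsum w (N + k) - rsum w N).
    { induction k; intros Hk.
      - simpl. rewrite Nat.add_0_r. unfold Rdiv. lra.
      - replace (N + S k)%nat with (S (N + k))%nat by lia. cbn [rsum]. rewrite S_INR.
        specialize (IHk ltac:(lia)).
        assert (u (2 * N)%nat <= u (N + k)%nat) by (apply Mono; lia).
        assert (1 <= INR N) by (apply (le_INR 1); lia).
        assert (INR (N + k) <= 2 * INR N) by (replace (2 * INR N) with (INR (2 * N)) by (rewrite mult_INR; simpl; ring); apply le_INR; lia).
        assert (1 <= INR (N + k)) by (apply (le_INR 1); lia).
        assert (u (2 * N)%nat / (2 * INR N) <= w (N + k)%nat).
        { unfold u in *. pose proof (Hw (N + k)%nat). pose proof (Hw (2*N)%nat).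
          assert (0 <= INR (2 * N) * w (2 * N)%nat) by (apply Rmult_le_pos; auto; apply pos_INR).
          apply Rmult_le_reg_r with (2 * INR N); [lra|]. unfold Rdiv. rewrite Rmult_assoc, Rinv_l by lra.
          nra. }
        unfold Rdiv in *. lra. }
    specialize (K N ltac:(lia)). replace (N + N)%nat with (2 * N)%nat in K by lia.
    assert (1 <= INR N) by (apply (le_INR 1); lia).
    replace (INR N * u (2 * N)%nat / (2 * INR N)) with (u (2 * N)%nat / 2) in K by (field; lra). lra. }
  destruct (abs_series_cv w (rsum w (S M) + INR M * w M / d)) as [L HL].
  { intro N. eapply Rle_trans; [|apply (Bd N)]. right. apply rsum_ext. intros; apply Rabs_pos_eq; auto. }
  pose proof (CV_Cauchy _ (exist _ L HL)) as C.
  intros eps He. destruct (C (eps / 2)) as [N1 HN1]; [lra|].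
  exists (2 * (S (max N1 M)))%nat. intros m Hm. unfold Rdist. rewrite Rminus_0_r.
  set (N := Nat.div2 m).
  assert (HN2 : (2 * N <= m)%nat) by (unfold N; pose proof (Nat.div2_odd m); destruct (Nat.odd m); simpl in *; lia).
  assert (HN3 : (S (max N1 M) <= N)%nat) by (unfold N; pose proof (Nat.div2_odd m); destruct (Nat.odd m); simpl in *; lia).
  assert (0 <= u m) by (unfold u; apply Rmult_le_pos; auto; apply pos_INR).
  rewrite Rabs_pos_eq by auto.
  assert (u m <= u (2 * N)%nat) by (apply Mono; lia).
  pose proof (Half N ltac:(lia) ltac:(lia)).
  specialize (HN1 (2 * N)%nat N ltac:(lia) ltac:(lia)). unfold Rdist in HN1.
  apply Rabs_def2 in HN1. fold u. lra.
Qed.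

Lemma h2_step : forall a b C m, notNonPosInt C ->
  h2 a b C (S m) = Cmul (h2 a b C m) (Cdiv (Cmul (Cadd a (Cnat m)) (Cadd b (Cnat m))) (Cmul (Cnat (S m)) (Cadd C (Cnat m)))).
Proof.
  intros a b C m HC. pose proof (nnpi_poch_nz C (S m) HC) as P. rewrite poch_S in P.
  pose proof (mul_nz_l _ _ P). pose proof (mul_nz_r _ _ P). pose proof (fact_nz m). pose proof (Cnat_nz m).
  unfold h2. rewrite !poch_S, Cnat_fact_S. field. repeat split; auto.
Qed.

Lemma poly_ev : forall p q r g s, 0 < s -> g + 1 - p - q - r >= s / 4 ->
  exists M0, forall m, M0 <= m -> (m + p) * (m + q) * (m + r) <= m * (m + 1) * (m + g).
Proof.
  intros p q r g s Hs H.
  set (A := g - (p * q + p * r + q * r)). set (B := p * q * r).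
  exists (1 + 4 / s * (Rabs A + Rabs B)). intros m Hm.
  assert (0 <= 4 / s * (Rabs A + Rabs B)) by (apply Rmult_le_pos; [apply Rlt_le, Rdiv_lt_0_compat; lra | pose proof (Rabs_pos A); pose proof (Rabs_pos B); lra]).
  assert (Hm1 : 1 <= m) by lra.
  assert (E : m * (m + 1) * (m + g) - (m + p) * (m + q) * (m + r) = (g + 1 - p - q - r) * m * m + A * m - B) by (unfold A, B; ring).
  assert (s / 4 * m >= Rabs A + Rabs B).
  { assert (s / 4 * (4 / s * (Rabs A + Rabs B)) = Rabs A + Rabs B) by (field; lra).
    assert (s / 4 * m >= s / 4 * (1 + 4 / s * (Rabs A + Rabs B))) by (apply Rle_ge, Rmult_le_compat_l; lra).
    assert (0 < s / 4) by lra. nra. }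
  assert (A * m >= - (Rabs A * m)) by (pose proof (Rle_abs (- A)); rewrite Rabs_Ropp in *; nra).
  assert (B <= Rabs B * m) by (pose proof (Rle_abs B); pose proof (Rabs_pos B); nra).
  assert ((g + 1 - p - q - r) * m * m >= s / 4 * m * m) by (apply Rle_ge; apply Rmult_le_compat_r; [lra|]; apply Rmult_le_compat_r; lra).
  assert (m * (s / 4 * m - (Rabs A + Rabs B)) >= 0) by (apply Rle_ge, Rmult_le_pos; lra).
  assert (m * (s / 4 * m - (Rabs A + Rabs B)) = s / 4 * m * m - Rabs A * m - Rabs B * m) by ring.
  lra.
Qed.

Lemma Cnorm_lower_nat : forall w m, 0 <= Re w + INR m -> Re w + INR m <= Cnorm (Cadd w (Cnat m)).
Proof. intros. pose proof (Cnorm_ge_Re (Cadd w (Cnat m))). unfold Cadd, Cnat, RtoC in *; cbn [Re Im] in *. lra. Qed.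

Lemma h2_raabe_cond : forall a b C, notNonPosInt C -> 0 < Re C - Re a - Re b ->
  exists M, forall m, (M <= m)%nat ->
    Cnorm (h2 a b C (S m)) * (INR m + 1 + (Re C - Re a - Re b) / 2) <= INR m * Cnorm (h2 a b C m).
Proof.
  intros a b C HC Hs. set (s := Re C - Re a - Re b).
  assert (Hs' : 0 < s) by (unfold s; lra).
  set (e := s / 8).
  destruct (poly_ev (Re a + e) (Re b + e) (1 + s / 2) (Re C) s ltac:(unfold s; lra) ltac:(unfold e, s; lra)) as [M0 HM0].
  set (T := Rmax M0 (Rmax (Rabs (Re a) + Im a * Im a / (2 * e) + 1) (Rmax (Rabs (Re b) + Im b * Im b / (2 * e) + 1) (Rabs (Re C) + 1)))).
  destruct (INR_unbounded T) as [M HM]. exists M. intros m Hm.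
  assert (HmT : T <= INR m) by (assert (INR M <= INR m) by (apply le_INR; auto); lra).
  assert (He : 0 < e) by (unfold e, s; lra).
  assert (T1 : M0 <= INR m) by (unfold T in HmT; pose proof (Rmax_l M0 (Rmax (Rabs (Re a) + Im a * Im a / (2 * e) + 1) (Rmax (Rabs (Re b) + Im b * Im b / (2 * e) + 1) (Rabs (Re C) + 1)))); lra).
  assert (T2 : Rabs (Re a) + Im a * Im a / (2 * e) + 1 <= INR m).
  { unfold T in HmT. pose proof (Rmax_r M0 (Rmax (Rabs (Re a) + Im a * Im a / (2 * e) + 1) (Rmax (Rabs (Re b) + Im b * Im b / (2 * e) + 1) (Rabs (Re C) + 1)))).
    pose proof (Rmax_l (Rabs (Re a) + Im a * Im a / (2 * e) + 1) (Rmax (Rabs (Re b) + Im b * Im b / (2 * e) + 1) (Rabs (Re C) + 1))). lra. }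
  assert (T3 : Rabs (Re b) + Im b * Im b / (2 * e) + 1 <= INR m).
  { unfold T in HmT. pose proof (Rmax_r M0 (Rmax (Rabs (Re a) + Im a * Im a / (2 * e) + 1) (Rmax (Rabs (Re b) + Im b * Im b / (2 * e) + 1) (Rabs (Re C) + 1)))).
    pose proof (Rmax_r (Rabs (Re a) + Im a * Im a / (2 * e) + 1) (Rmax (Rabs (Re b) + Im b * Im b / (2 * e) + 1) (Rabs (Re C) + 1))).
    pose proof (Rmax_l (Rabs (Re b) + Im b * Im b / (2 * e) + 1) (Rabs (Re C) + 1)). lra. }
  assert (T4 : Rabs (Re C) + 1 <= INR m).
  { unfold T in HmT. pose proof (Rmax_r M0 (Rmax (Rabs (Re a) + Im a * Im a / (2 * e) + 1) (Rmax (Rabs (Re b) + Im b * Im b / (2 * e) + 1) (Rabs (Re C) + 1)))).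
    pose proof (Rmax_r (Rabs (Re a) + Im a * Im a / (2 * e) + 1) (Rmax (Rabs (Re b) + Im b * Im b / (2 * e) + 1) (Rabs (Re C) + 1))).
    pose proof (Rmax_r (Rabs (Re b) + Im b * Im b / (2 * e) + 1) (Rabs (Re C) + 1)). lra. }
  assert (Qa : 0 <= Im a * Im a / (2 * e)) by (apply Rdiv_le_0'; nra).
  assert (Qb : 0 <= Im b * Im b / (2 * e)) by (apply Rdiv_le_0'; nra).
  pose proof (Rle_abs (Re a)). pose proof (Rle_abs (- Re a)). rewrite Rabs_Ropp in *.
  pose proof (Rle_abs (Re b)). pose proof (Rle_abs (- Re b)).
  pose proof (Rle_abs (Re C)). pose proof (Rle_abs (- Re C)). rewrite !Rabs_Ropp in *.
  assert (Na : Cnorm (Cadd a (Cnat m)) <= Re a + INR m + e).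
  { replace (Re a + INR m) with (Re (Cadd a (Cnat m))) by reflexivity. apply Cnorm_upper; auto.
    replace (Im (Cadd a (Cnat m))) with (Im a) by (unfold Cadd, Cnat, RtoC; simpl; ring).
    change (Re (Cadd a (Cnat m))) with (Re a + INR m).
    assert (Im a * Im a = 2 * e * (Im a * Im a / (2 * e))) by (field; lra). nra. }
  assert (Nb : Cnorm (Cadd b (Cnat m)) <= Re b + INR m + e).
  { replace (Re b + INR m) with (Re (Cadd b (Cnat m))) by reflexivity. apply Cnorm_upper; auto.
    replace (Im (Cadd b (Cnat m))) with (Im b) by (unfold Cadd, Cnat, RtoC; simpl; ring).
    change (Re (Cadd b (Cnat m))) with (Re b + INR m).
    assert (Im b * Im b = 2 * e * (Im b * Im b / (2 * e))) by (field; lra). nra. }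
  assert (NC : Re C + INR m <= Cnorm (Cadd C (Cnat m))) by (apply Cnorm_lower_nat; lra).
  assert (Poly := HM0 (INR m) T1).
  assert (Key : Cnorm (Cadd a (Cnat m)) * Cnorm (Cadd b (Cnat m)) * (INR m + 1 + s / 2) <= INR m * (INR m + 1) * Cnorm (Cadd C (Cnat m))).
  { pose proof (Cnorm_pos (Cadd a (Cnat m))). pose proof (Cnorm_pos (Cadd b (Cnat m))).
    apply Rle_trans with ((INR m + (Re a + e)) * (INR m + (Re b + e)) * (INR m + (1 + s / 2))).
    - apply Rmult_le_compat.
      + apply Rmult_le_pos; auto.
      + lra.
      + apply Rmult_le_compat; auto; lra.
      + lra.
    - eapply Rle_trans; [exact Poly|]. apply Rmult_le_compat_l; [nra|]. lra. }
  rewrite h2_step by auto. rewrite Cnorm_mul, Cnorm_div, !Cnorm_mul, Cnorm_Cnat.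
  2:{ apply Cmul_nz. apply Cnat_nz. pose proof (nnpi_poch_nz C (S m) HC) as P. rewrite poch_S in P. eapply mul_nz_r; eauto. }
  fold s.
  assert (0 < Cnorm (Cadd C (Cnat m))) by nra.
  pose proof (Cnorm_pos (h2 a b C m)).
  rewrite S_INR. unfold Rdiv.
  replace (Cnorm (h2 a b C m) * (Cnorm (Cadd a (Cnat m)) * Cnorm (Cadd b (Cnat m)) * / ((INR m + 1) * Cnorm (Cadd C (Cnat m)))) * (INR m + 1 + s * / 2))
    with (Cnorm (h2 a b C m) * / ((INR m + 1) * Cnorm (Cadd C (Cnat m))) * (Cnorm (Cadd a (Cnat m)) * Cnorm (Cadd b (Cnat m)) * (INR m + 1 + s / 2))) by (unfold Rdiv; ring).
  replace (INR m * Cnorm (h2 a b C m)) with (Cnorm (h2 a b C m) * / ((INR m + 1) * Cnorm (Cadd C (Cnat m))) * (INR m * (INR m + 1) * Cnorm (Cadd C (Cnat m)))) by (field; nra).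
  apply Rmult_le_compat_l; auto. apply Rmult_le_pos; auto. apply Rlt_le, Rinv_0_lt_compat. nra.
Qed.

Lemma h2_conv : forall a b C, notNonPosInt C -> 0 < Re C - Re a - Re b ->
  (exists B, forall N, rsum (fun m => Cnorm (h2 a b C m)) N <= B) /\
  (exists S, Ccv (Csum (h2 a b C)) S) /\
  Ccv (fun m => Cmul (Cnat m) (h2 a b C m)) Cx0.
Proof.
  intros a b C HC Hs. destruct (h2_raabe_cond a b C HC Hs) as [M HM].
  destruct (raabe (fun m => Cnorm (h2 a b C m)) ((Re C - Re a - Re b) / 2) M ltac:(lra) (fun m => Cnorm_pos _) HM)
    as [[B HB] Hcv].
  split; [exists B; auto|]. split; [eapply Csum_abs_cv; eauto|].
  split; cbn [Re Im Cx0].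
  - apply (Rcv_0_le _ (fun m => INR m * Cnorm (h2 a b C m))); auto. exists 0%nat. intros n _.
    eapply Rle_trans; [apply Re_le_Cnorm|]. rewrite Cnorm_mul, Cnorm_Cnat. lra.
  - apply (Rcv_0_le _ (fun m => INR m * Cnorm (h2 a b C m))); auto. exists 0%nat. intros n _.
    eapply Rle_trans; [apply Im_le_Cnorm|]. rewrite Cnorm_mul, Cnorm_Cnat. lra.
Qed.

Lemma contig_term : forall a b C m, notNonPosInt C ->
  Csub (Cmul (Cmul C (Csub C (Cadd a b))) (h2 a b C m)) (Cmul (Cmul (Csub C a) (Csub C b)) (h2 a b (Cadd C Cx1) m)) =
  Csub (Cmul C (Cmul (Cnat m) (h2 a b C m))) (Cmul C (Cmul (Cnat (S m)) (h2 a b C (S m)))).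
Proof.
  intros a b C m HC. pose proof (nnpi_poch_nz C (S m) HC) as P. rewrite poch_S in P.
  pose proof (mul_nz_l _ _ P). pose proof (mul_nz_r _ _ P). pose proof (fact_nz m). pose proof (Cnat_nz m).
  pose proof (nnpi_nz C HC).
  assert (E : poch (Cadd C Cx1) m = Cdiv (Cmul (poch C m) (Cadd C (Cnat m))) C).
  { rewrite <- poch_S, poch_S_left. field. auto. }
  unfold h2. rewrite E, !poch_S, Cnat_fact_S. rewrite Cnat_S in *. field. repeat split; auto.
Qed.

Lemma Csum_telescope : forall g N, Csum (fun m => Csub (g m) (g (S m))) N = Csub (g 0%nat) (g N).
Proof. intros g N; induction N; simpl. - ring. - rewrite IHN. ring. Qed.

Lemma contig : forall a b C S1 S2, notNonPosInt C -> 0 < Re C - Re a - Re b ->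
  Ccv (Csum (h2 a b C)) S1 -> Ccv (Csum (h2 a b (Cadd C Cx1))) S2 ->
  Cmul (Cmul C (Csub C (Cadd a b))) S1 = Cmul (Cmul (Csub C a) (Csub C b)) S2.
Proof.
  intros a b C S1 S2 HC Hs H1 H2.
  destruct (h2_conv a b C HC Hs) as [_ [_ H0]].
  assert (L : Ccv (fun N => Csub (Cmul (Cmul C (Csub C (Cadd a b))) (Csum (h2 a b C) N))
                                  (Cmul (Cmul (Csub C a) (Csub C b)) (Csum (h2 a b (Cadd C Cx1)) N)))
              (Csub (Cmul (Cmul C (Csub C (Cadd a b))) S1) (Cmul (Cmul (Csub C a) (Csub C b)) S2))).
  { apply Ccv_sub; apply Ccv_mul; auto; apply Ccv_const. }
  assert (L2 : Ccv (fun N => Csub (Cmul (Cmul C (Csub C (Cadd a b))) (Csum (h2 a b C) N))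
                                  (Cmul (Cmul (Csub C a) (Csub C b)) (Csum (h2 a b (Cadd C Cx1)) N))) Cx0).
  { set (g := fun m => Cmul C (Cmul (Cnat m) (h2 a b C m))).
    assert (EqN : forall N, Csub (g 0%nat) (g N) = Csub (Cmul (Cmul C (Csub C (Cadd a b))) (Csum (h2 a b C) N))
                                  (Cmul (Cmul (Csub C a) (Csub C b)) (Csum (h2 a b (Cadd C Cx1)) N))).
    { intro N. rewrite <- !Csum_scal. unfold Csub at 2. rewrite <- Csum_opp, <- Csum_add.
      rewrite <- (Csum_telescope g). apply Csum_ext. intros m _. unfold g. rewrite <- contig_term by auto. reflexivity. }
    apply (Ccv_ext _ _ _ EqN).
    replace Cx0 with (Csub (g 0%nat) (Cmul C Cx0)) by (unfold g; rewrite Cnat_0; ring).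
    apply Ccv_sub. apply Ccv_const. apply Ccv_mul; auto. apply Ccv_const. }
  pose proof (Ccv_unique _ _ _ L L2) as E.
  replace (Cmul (Cmul C (Csub C (Cadd a b))) S1) with
    (Cadd (Csub (Cmul (Cmul C (Csub C (Cadd a b))) S1) (Cmul (Cmul (Csub C a) (Csub C b)) S2)) (Cmul (Cmul (Csub C a) (Csub C b)) S2)) by ring.
  rewrite E. ring.
Qed.

Lemma Rcpow_add : forall x u v, 0 < x -> Rcpow x (Cadd u v) = Cmul (Rcpow x u) (Rcpow x v).
Proof.
  intros x u v Hx. rewrite !Rcpow_pol by auto. rewrite pol_mul, <- exp_plus.
  unfold Cadd; cbn [Re Im]. f_equal; [f_equal|]; ring.
Qed.

Lemma Gs_poch : forall z n, notNonPosInt z -> (1 <= n)%nat ->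
  poch z n = Cdiv (Cmul (Cnat (Factorial.fact n)) (Rcpow (INR n) z)) (Cmul (Gs n z) (Cadd z (Cnat n))).
Proof.
  intros z n Hz Hn. assert (0 < INR n) by (apply lt_0_INR; lia).
  pose proof (nnpi_poch_nz z (S n) Hz) as P. rewrite poch_S in P.
  pose proof (mul_nz_l _ _ P). pose proof (mul_nz_r _ _ P). pose proof (fact_nz n).
  pose proof (Rcpow_nz (INR n) z H).
  unfold Gs. rewrite poch_S. field. repeat split; auto.
Qed.

Lemma Gs_nz : forall z n, notNonPosInt z -> (1 <= n)%nat -> Gs n z <> Cx0.
Proof.
  intros z n Hz Hn. assert (0 < INR n) by (apply lt_0_INR; lia). unfold Gs.
  apply Cdiv_nz. apply Cmul_nz. apply fact_nz. apply Rcpow_nz; auto. apply nnpi_poch_nz; auto.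
Qed.

Definition Tn (a b C : Cx) (n : nat) :=
  Cdiv (Cmul (poch (Csub C a) n) (poch (Csub C b) n)) (Cmul (poch C n) (poch (Csub C (Cadd a b)) n)).

Definition onepl (X : Cx) (n : nat) := Cadd Cx1 (Cmul X (Cinv (Cnat n))).

Lemma onepl_cv : forall X, Ccv (onepl X) Cx1.
Proof. intro X. assert (H := Ccv_add _ _ _ _ (Ccv_const Cx1) (Ccv_inv_n X)).
  replace (Cadd Cx1 Cx0) with Cx1 in H by ring. exact H. Qed.

Lemma onepl_eq : forall X n, (1 <= n)%nat -> onepl X n = Cdiv (Cadd X (Cnat n)) (Cnat n).
Proof. intros X n Hn. assert (Cnat n <> Cx0) by (destruct n; [lia|apply Cnat_nz]). unfold onepl. field. auto. Qed.

Lemma Tn_Gs : forall a b C n, notNonPosInt C -> notNonPosInt (Csub C a) -> notNonPosInt (Csub C b) ->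
  notNonPosInt (Csub C (Cadd a b)) -> (1 <= n)%nat ->
  Tn a b C n = Cmul (Cdiv (Cmul (Gs n C) (Gs n (Csub C (Cadd a b)))) (Cmul (Gs n (Csub C a)) (Gs n (Csub C b))))
                    (Cdiv (Cmul (onepl C n) (onepl (Csub C (Cadd a b)) n)) (Cmul (onepl (Csub C a) n) (onepl (Csub C b) n))).
Proof.
  intros a b C n HC HA HB HD Hn. assert (Hn0 : 0 < INR n) by (apply lt_0_INR; lia).
  rewrite !onepl_eq by auto. unfold Tn.
  rewrite (Gs_poch C), (Gs_poch (Csub C a)), (Gs_poch (Csub C b)), (Gs_poch (Csub C (Cadd a b))) by auto.
  assert (E : Rcpow (INR n) C = Cdiv (Cmul (Rcpow (INR n) (Csub C a)) (Rcpow (INR n) (Csub C b))) (Rcpow (INR n) (Csub C (Cadd a b)))).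
  { rewrite <- Rcpow_add by auto. pose proof (Rcpow_nz (INR n) (Csub C (Cadd a b)) Hn0).
    apply (Cx_field_theory.(F_R).(Rmul_comm) _ _ ) in H || idtac.
    replace (Cadd (Csub C a) (Csub C b)) with (Cadd C (Csub C (Cadd a b))) by ring.
    rewrite Rcpow_add by auto. field. auto. }
  rewrite E.
  pose proof (Gs_nz C n HC Hn). pose proof (Gs_nz _ n HA Hn). pose proof (Gs_nz _ n HB Hn). pose proof (Gs_nz _ n HD Hn).
  pose proof (Rcpow_nz (INR n) (Csub C a) Hn0). pose proof (Rcpow_nz (INR n) (Csub C b) Hn0).
  pose proof (Rcpow_nz (INR n) (Csub C (Cadd a b)) Hn0). pose proof (fact_nz n).
  assert (Cnat n <> Cx0) by (destruct n; [lia|apply Cnat_nz]).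
  assert (forall z, notNonPosInt z -> Cadd z (Cnat n) <> Cx0).
  { intros z Hz. pose proof (nnpi_poch_nz z (S n) Hz) as P. rewrite poch_S in P. eapply mul_nz_r; eauto. }
  pose proof (H8 C HC). pose proof (H8 _ HA). pose proof (H8 _ HB). pose proof (H8 _ HD).
  field. repeat split; auto.
Qed.

Lemma Tn_cv : forall a b C, notNonPosInt C -> notNonPosInt (Csub C a) -> notNonPosInt (Csub C b) ->
  0 < Re C - Re a - Re b ->
  Ccv (Tn a b C) (Cdiv (Cmul (Gamma C) (Gamma (Csub C (Cadd a b)))) (Cmul (Gamma (Csub C a)) (Gamma (Csub C b)))).
Proof.
  intros a b C HC HA HB Hs.
  assert (HD : notNonPosInt (Csub C (Cadd a b))) by (apply repos_nnpi; unfold Csub, Cadd, Copp; cbn [Re]; lra).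
  destruct (Gamma_spec C HC) as [G1 N1]. destruct (Gamma_spec _ HA) as [G2 N2].
  destruct (Gamma_spec _ HB) as [G3 N3]. destruct (Gamma_spec _ HD) as [G4 N4].
  eapply Ccv_ext_ev. { exists 1%nat. intros n Hn. symmetry. apply Tn_Gs; auto. }
  replace (Cdiv (Cmul (Gamma C) (Gamma (Csub C (Cadd a b)))) (Cmul (Gamma (Csub C a)) (Gamma (Csub C b))))
    with (Cmul (Cdiv (Cmul (Gamma C) (Gamma (Csub C (Cadd a b)))) (Cmul (Gamma (Csub C a)) (Gamma (Csub C b))))
               (Cdiv (Cmul Cx1 Cx1) (Cmul Cx1 Cx1))) by (field; repeat split; auto; apply Cx1_nz).
  apply Ccv_mul.
  - apply Ccv_div. apply Cmul_nz; auto. apply Ccv_mul; auto. apply Ccv_mul; auto.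
  - apply Ccv_div. apply Cmul_nz; apply Cx1_nz. apply Ccv_mul; apply onepl_cv. apply Ccv_mul; apply onepl_cv.
Qed.

Lemma Rcv_c_over : forall c r, Un_cv (fun n => c / (r + INR n)) 0.
Proof.
  intros c r. destruct (INR_unbounded (Rabs r + 1)) as [N HN].
  apply (Rcv_ext_ev (fun n => c * / INR n * / (1 + r * / INR n))).
  { exists N. intros n Hn. assert (INR N <= INR n) by (apply le_INR; auto).
    pose proof (Rle_abs r). pose proof (Rle_abs (- r)). rewrite Rabs_Ropp in *.
    field. split; lra. }
  replace 0 with (c * 0 * / (1 + r * 0)) by (field; lra).
  apply CV_mult. apply CV_mult. apply Rcv_const. apply Rcv_inv_n.
  apply Rcv_inv. lra. apply CV_plus. apply Rcv_const. apply CV_mult. apply Rcv_const. apply Rcv_inv_n.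
Qed.

Lemma poch_norm_mono : forall C n0 n m, 0 <= Re C + INR n0 -> (n0 <= n)%nat ->
  Cnorm (poch (Cadd C (Cnat n0)) (S m)) * Cnorm (Cadd C (Cnat n)) <=
  Cnorm (poch (Cadd C (Cnat n)) (S m)) * Cnorm (Cadd C (Cnat n0)).
Proof.
  intros C n0 n m H Hn. induction m.
  - simpl. rewrite Cnat_0. replace (Cmul Cx1 (Cadd (Cadd C (Cnat n0)) Cx0)) with (Cadd C (Cnat n0)) by ring.
    replace (Cmul Cx1 (Cadd (Cadd C (Cnat n)) Cx0)) with (Cadd C (Cnat n)) by ring. lra.
  - rewrite (poch_S (Cadd C (Cnat n0))), (poch_S (Cadd C (Cnat n))), !Cnorm_mul.
    replace (Cadd (Cadd C (Cnat n0)) (Cnat (S m))) with (Cadd C (Cnat (n0 + S m))) by (rewrite Cnat_add; ring).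
    replace (Cadd (Cadd C (Cnat n)) (Cnat (S m))) with (Cadd C (Cnat (n + S m))) by (rewrite Cnat_add; ring).
    assert (Cnorm (Cadd C (Cnat (n0 + S m))) <= Cnorm (Cadd C (Cnat (n + S m)))).
    { apply Cnorm_add_nat_mono; [|lia]. rewrite plus_INR. pose proof (pos_INR (S m)). lra. }
    pose proof (Cnorm_pos (Cadd C (Cnat (n0 + S m)))). pose proof (Cnorm_pos (Cadd C (Cnat n0))).
    pose proof (Cnorm_pos (Cadd C (Cnat n))).
    pose proof (Cnorm_pos (poch (Cadd C (Cnat n)) (S m))).
    pose proof (Cnorm_pos (poch (Cadd C (Cnat n0)) (S m))).
    set (c0 := Cnorm (Cadd C (Cnat (n0 + S m)))) in *. set (c1 := Cnorm (Cadd C (Cnat (n + S m)))) in *.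
    set (P0 := Cnorm (poch (Cadd C (Cnat n0)) (S m))) in *. set (P1 := Cnorm (poch (Cadd C (Cnat n)) (S m))) in *.
    set (K0 := Cnorm (Cadd C (Cnat n0))) in *. set (K1 := Cnorm (Cadd C (Cnat n))) in *.
    apply Rle_trans with (P1 * K0 * c0).
    - replace (P0 * c0 * K1) with (P0 * K1 * c0) by ring. apply Rmult_le_compat_r; auto.
    - replace (P1 * c1 * K0) with (P1 * K0 * c1) by ring. apply Rmult_le_compat_l; auto. nra.
Qed.

Lemma Cnorm_pos_nz : forall z, z <> Cx0 -> 0 < Cnorm z.
Proof. intros z Hz. pose proof (Cnorm2_pos z Hz). unfold Cnorm. apply sqrt_lt_R0. nra. Qed.

Lemma h2_norm_mono : forall a b C n0 n j, notNonPosInt C -> 0 <= Re C + INR n0 -> (n0 <= n)%nat ->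
  Cnorm (h2 a b (Cadd C (Cnat n)) (S j)) * Cnorm (Cadd C (Cnat n)) <=
  Cnorm (h2 a b (Cadd C (Cnat n0)) (S j)) * Cnorm (Cadd C (Cnat n0)).
Proof.
  intros a b C n0 n j HC H Hn.
  pose proof (poch_norm_mono C n0 n j H Hn) as M.
  assert (P0 : 0 < Cnorm (poch (Cadd C (Cnat n0)) (S j))) by (apply Cnorm_pos_nz, nnpi_poch_nz, nnpi_add; auto).
  assert (P1 : 0 < Cnorm (poch (Cadd C (Cnat n)) (S j))) by (apply Cnorm_pos_nz, nnpi_poch_nz, nnpi_add; auto).
  assert (F : 0 < Cnorm (Cnat (Factorial.fact (S j)))) by (apply Cnorm_pos_nz, fact_nz).
  unfold h2. rewrite !Cnorm_div, !Cnorm_mul.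
  2: apply Cmul_nz; [apply fact_nz| apply nnpi_poch_nz, nnpi_add; auto].
  2: apply Cmul_nz; [apply fact_nz| apply nnpi_poch_nz, nnpi_add; auto].
  set (X := Cnorm (poch a (S j)) * Cnorm (poch b (S j))).
  assert (0 <= X) by (unfold X; apply Rmult_le_pos; apply Cnorm_pos).
  set (Fc := Cnorm (Cnat (Factorial.fact (S j)))) in *.
  set (Q0 := Cnorm (poch (Cadd C (Cnat n0)) (S j))) in *. set (Q1 := Cnorm (poch (Cadd C (Cnat n)) (S j))) in *.
  set (K0 := Cnorm (Cadd C (Cnat n0))) in *. set (K1 := Cnorm (Cadd C (Cnat n))) in *.
  replace (X / (Fc * Q1) * K1) with (X / Fc * (K1 / Q1)) by (field; lra).
  replace (X / (Fc * Q0) * K0) with (X / Fc * (K0 / Q0)) by (field; lra).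
  apply Rmult_le_compat_l. apply Rdiv_le_0'; auto.
  apply Rmult_le_reg_r with (Q0 * Q1). nra.
  replace (K1 / Q1 * (Q0 * Q1)) with (Q0 * K1) by (field; lra).
  replace (K0 / Q0 * (Q0 * Q1)) with (Q1 * K0) by (field; lra). lra.
Qed.

Lemma h2_0 : forall a b C, h2 a b C 0 = Cx1.
Proof. intros. unfold h2. simpl poch. change (Factorial.fact 0) with 1%nat.
  replace (Cnat 1) with Cx1 by (rewrite Cnat_S, Cnat_0; ring). field. apply Cx1_nz. Qed.

Lemma rsum_shift : forall f N, rsum f (S N) = f 0%nat + rsum (fun j => f (S j)) N.
Proof. intros f N; induction N. - simpl; ring. - change (rsum f (S (S N))) with (rsum f (S N) + f (S N)). rewrite IHN. simpl. ring. Qed.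

Lemma rsum_mult_r : forall f c N, rsum (fun j => f j * c) N = rsum f N * c.
Proof. intros f c N; induction N. - simpl; ring. - change (rsum (fun j => f j * c) (S N)) with (rsum (fun j => f j * c) N + f N * c).
  rewrite IHN. simpl. ring. Qed.

Lemma tail_cv : forall a b C (Sv : nat -> Cx), notNonPosInt C -> 0 < Re C - Re a - Re b ->
  (forall n, Ccv (Csum (h2 a b (Cadd C (Cnat n)))) (Sv n)) -> Ccv Sv Cx1.
Proof.
  intros a b C Sv HC Hs HS.
  destruct (INR_unbounded (Rabs (Re C))) as [n0 Hn0].
  assert (Hpos : 0 < Re C + INR n0) by (pose proof (Rle_abs (- Re C)); rewrite Rabs_Ropp in *; lra).
  assert (HC0 : notNonPosInt (Cadd C (Cnat n0))) by (apply nnpi_add; auto).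
  destruct (h2_conv a b (Cadd C (Cnat n0)) HC0) as [[B0 HB0] _].
  { unfold Cadd, Cnat, RtoC; cbn [Re]. pose proof (pos_INR n0). lra. }
  set (K0 := Cnorm (Cadd C (Cnat n0))).
  assert (Bound : forall n N, (n0 <= n)%nat ->
     rsum (fun j => Cnorm (h2 a b (Cadd C (Cnat n)) (S j))) N * Cnorm (Cadd C (Cnat n)) <= B0 * K0).
  { intros n N Hn. 
    assert (rsum (fun j => Cnorm (h2 a b (Cadd C (Cnat n)) (S j))) N * Cnorm (Cadd C (Cnat n)) =
            rsum (fun j => Cnorm (h2 a b (Cadd C (Cnat n)) (S j)) * Cnorm (Cadd C (Cnat n))) N).
    { symmetry. apply rsum_mult_r. }
    rewrite H. eapply Rle_trans.
    { apply rsum_le. intro j. apply (h2_norm_mono a b C n0 n j); auto; lra. }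
    assert (rsum (fun j => Cnorm (h2 a b (Cadd C (Cnat n0)) (S j)) * K0) N =
            rsum (fun j => Cnorm (h2 a b (Cadd C (Cnat n0)) (S j))) N * K0).
    { apply rsum_mult_r. }
    fold K0. rewrite H0. apply Rmult_le_compat_r; [apply Cnorm_pos|].
    eapply Rle_trans; [|apply (HB0 (S N))]. rewrite rsum_shift.
    pose proof (Cnorm_pos (h2 a b (Cadd C (Cnat n0)) 0)). lra. }
  assert (Ev : forall n, (n0 <= n)%nat ->
     Rabs (Re (Sv n) - 1) <= B0 * K0 / (Re C + INR n) /\ Rabs (Im (Sv n)) <= B0 * K0 / (Re C + INR n)).
  { intros n Hn. assert (INR n0 <= INR n) by (apply le_INR; auto).
    assert (Kp : Re C + INR n <= Cnorm (Cadd C (Cnat n))) by (apply Cnorm_lower_nat; lra).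
    assert (Bn : forall N, rsum (fun j => Cnorm (h2 a b (Cadd C (Cnat n)) (S j))) N <= B0 * K0 / (Re C + INR n)).
    { intro N. specialize (Bound n N Hn).
      pose proof (Cnorm_pos (Cadd C (Cnat n))).
      assert (0 <= rsum (fun j => Cnorm (h2 a b (Cadd C (Cnat n)) (S j))) N).
      { replace 0 with (rsum (fun j => Cnorm (h2 a b (Cadd C (Cnat n)) (S j))) 0) by reflexivity.
        apply rsum_nonneg_mono; [intro; apply Cnorm_pos|lia]. }
      apply Rmult_le_reg_r with (Re C + INR n); [lra|]. unfold Rdiv. rewrite Rmult_assoc, Rinv_l by lra. nra. }
    destruct (HS n) as [HR HI].
    split.
    - apply Rabs_le. split.
      + apply Rle_trans with (- (B0 * K0 / (Re C + INR n))); [lra|].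
        assert (- (B0 * K0 / (Re C + INR n)) - (Re (Sv n) - 1) <= 0); [|lra].
        apply (Rcv_le (fun N => - (B0 * K0 / (Re C + INR n)) - (Re (Csum (h2 a b (Cadd C (Cnat n))) (S N)) - 1))).
        { apply CV_minus. apply Rcv_const. apply CV_minus. apply (Rcv_shift' (fun N => Re (Csum (h2 a b (Cadd C (Cnat n))) N))). auto. apply Rcv_const. }
        exists 0%nat. intros N _. rewrite Csum_shift, h2_0. unfold Cadd at 1. cbn [Re Cx1]. rewrite Re_Csum.
        pose proof (rsum_abs_diff (fun j => Re (h2 a b (Cadd C (Cnat n)) (S j))) 0 N ltac:(lia)) as A.
        simpl rsum at 2 4 in A. rewrite !Rminus_0_r in A.
        pose proof (rsum_le _ _ N (fun j => Re_le_Cnorm (h2 a b (Cadd C (Cnat n)) (S j)))).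
        pose proof (Bn N). pose proof (Rle_abs (- rsum (fun j => Re (h2 a b (Cadd C (Cnat n)) (S j))) N)). rewrite Rabs_Ropp in *. lra.
      + apply Rcv_le with (fun N => Re (Csum (h2 a b (Cadd C (Cnat n))) (S N)) - 1).
        { apply CV_minus. apply (Rcv_shift' (fun N => Re (Csum (h2 a b (Cadd C (Cnat n))) N))). auto. apply Rcv_const. }
        exists 0%nat. intros N _. rewrite Csum_shift, h2_0. unfold Cadd at 1. cbn [Re Cx1]. rewrite Re_Csum.
        pose proof (rsum_abs_diff (fun j => Re (h2 a b (Cadd C (Cnat n)) (S j))) 0 N ltac:(lia)) as A.
        simpl rsum at 2 4 in A. rewrite !Rminus_0_r in A.
        pose proof (rsum_le _ _ N (fun j => Re_le_Cnorm (h2 a b (Cadd C (Cnat n)) (S j)))).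
        pose proof (Bn N). pose proof (Rle_abs (rsum (fun j => Re (h2 a b (Cadd C (Cnat n)) (S j))) N)). lra.
    - apply Rabs_le. split.
      + assert (- (B0 * K0 / (Re C + INR n)) - Im (Sv n) <= 0); [|lra].
        apply (Rcv_le (fun N => - (B0 * K0 / (Re C + INR n)) - Im (Csum (h2 a b (Cadd C (Cnat n))) (S N)))).
        { apply CV_minus. apply Rcv_const. apply (Rcv_shift' (fun N => Im (Csum (h2 a b (Cadd C (Cnat n))) N))). auto. }
        exists 0%nat. intros N _. rewrite Csum_shift, h2_0. unfold Cadd at 1. cbn [Im Cx1]. rewrite Im_Csum.
        pose proof (rsum_abs_diff (fun j => Im (h2 a b (Cadd C (Cnat n)) (S j))) 0 N ltac:(lia)) as A.
        simpl rsum at 2 4 in A. rewrite !Rminus_0_r in A.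
        pose proof (rsum_le _ _ N (fun j => Im_le_Cnorm (h2 a b (Cadd C (Cnat n)) (S j)))).
        pose proof (Bn N). pose proof (Rle_abs (- rsum (fun j => Im (h2 a b (Cadd C (Cnat n)) (S j))) N)). rewrite Rabs_Ropp in *. lra.
      + apply Rcv_le with (fun N => Im (Csum (h2 a b (Cadd C (Cnat n))) (S N))).
        { apply (Rcv_shift' (fun N => Im (Csum (h2 a b (Cadd C (Cnat n))) N))). auto. }
        exists 0%nat. intros N _. rewrite Csum_shift, h2_0. unfold Cadd at 1. cbn [Im Cx1]. rewrite Im_Csum.
        pose proof (rsum_abs_diff (fun j => Im (h2 a b (Cadd C (Cnat n)) (S j))) 0 N ltac:(lia)) as A.
        simpl rsum at 2 4 in A. rewrite !Rminus_0_r in A.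
        pose proof (rsum_le _ _ N (fun j => Im_le_Cnorm (h2 a b (Cadd C (Cnat n)) (S j)))).
        pose proof (Bn N). pose proof (Rle_abs (rsum (fun j => Im (h2 a b (Cadd C (Cnat n)) (S j))) N)). lra. }
  split; cbn [Re Im Cx1].
  - assert (U : Un_cv (fun n => Re (Sv n) - 1) 0).
    { apply (Rcv_0_le _ (fun n => B0 * K0 / (Re C + INR n))). apply Rcv_c_over.
      exists n0. intros n Hn. apply Ev; auto. }
    intros eps He. destruct (U eps He) as [N HN]. exists N. intros n Hn. specialize (HN n Hn).
    unfold Rdist in *. rewrite Rminus_0_r in HN. exact HN.
  - apply (Rcv_0_le _ (fun n => B0 * K0 / (Re C + INR n))). apply Rcv_c_over.
    exists n0. intros n Hn. apply Ev; auto.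
Qed.


Theorem gauss : forall a b C, notNonPosInt C -> notNonPosInt (Csub C a) -> notNonPosInt (Csub C b) ->
  0 < Re C - Re a - Re b ->
  Ccv (Csum (h2 a b C)) (Cdiv (Cmul (Gamma C) (Gamma (Csub C (Cadd a b)))) (Cmul (Gamma (Csub C a)) (Gamma (Csub C b)))).
Proof.
  intros a b C HC HA HB Hs.
  assert (HD : notNonPosInt (Csub C (Cadd a b))) by (apply repos_nnpi; unfold Csub, Cadd, Copp; cbn [Re]; lra).
  assert (Hn : forall n, notNonPosInt (Cadd C (Cnat n)) /\ 0 < Re (Cadd C (Cnat n)) - Re a - Re b).
  { intro n. split. apply nnpi_add; auto. unfold Cadd, Cnat, RtoC; cbn [Re]. pose proof (pos_INR n). lra. }
  set (Sv := fun n => Clim (Csum (h2 a b (Cadd C (Cnat n))))).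
  assert (HS : forall n, Ccv (Csum (h2 a b (Cadd C (Cnat n)))) (Sv n)).
  { intro n. destruct (Hn n) as [H1 H2]. destruct (h2_conv a b _ H1 H2) as [_ [[S HS] _]].
    unfold Sv. rewrite (Clim_eq _ _ HS). auto. }
  assert (It : forall n, Cmul (Cmul (poch C n) (poch (Csub C (Cadd a b)) n)) (Sv 0%nat) =
                         Cmul (Cmul (poch (Csub C a) n) (poch (Csub C b) n)) (Sv n)).
  { induction n. - simpl. ring.
    - rewrite !poch_S.
      destruct (Hn n) as [H1 H2].
      assert (HS' : Ccv (Csum (h2 a b (Cadd (Cadd C (Cnat n)) Cx1))) (Sv (S n))).
      { replace (Cadd (Cadd C (Cnat n)) Cx1) with (Cadd C (Cnat (S n))) by (rewrite Cnat_S; ring). apply HS. }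
      pose proof (contig a b (Cadd C (Cnat n)) _ _ H1 H2 (HS n) HS') as E.
      replace (Cadd (Csub C (Cadd a b)) (Cnat n)) with (Csub (Cadd C (Cnat n)) (Cadd a b)) by ring.
      replace (Cadd (Csub C a) (Cnat n)) with (Csub (Cadd C (Cnat n)) a) by ring.
      replace (Cadd (Csub C b) (Cnat n)) with (Csub (Cadd C (Cnat n)) b) by ring.
      transitivity (Cmul (Cmul (Cmul (poch C n) (poch (Csub C (Cadd a b)) n)) (Sv 0%nat))
                         (Cmul (Cadd C (Cnat n)) (Csub (Cadd C (Cnat n)) (Cadd a b)))); [ring|].
      rewrite IHn.
      transitivity (Cmul (Cmul (poch (Csub C a) n) (poch (Csub C b) n))
                         (Cmul (Cmul (Cadd C (Cnat n)) (Csub (Cadd C (Cnat n)) (Cadd a b))) (Sv n))); [ring|].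
      rewrite E. ring. }
  assert (Eq : forall n, Sv 0%nat = Cmul (Tn a b C n) (Sv n)).
  { intro n. pose proof (nnpi_poch_nz C n HC). pose proof (nnpi_poch_nz _ n HD).
    transitivity (Cdiv (Cmul (Cmul (poch C n) (poch (Csub C (Cadd a b)) n)) (Sv 0%nat)) (Cmul (poch C n) (poch (Csub C (Cadd a b)) n))).
    { field. split; auto. }
    rewrite It. unfold Tn. field. split; auto. }
  assert (L : Ccv (fun n => Cmul (Tn a b C n) (Sv n))
     (Cmul (Cdiv (Cmul (Gamma C) (Gamma (Csub C (Cadd a b)))) (Cmul (Gamma (Csub C a)) (Gamma (Csub C b)))) Cx1)).
  { apply Ccv_mul. apply Tn_cv; auto. apply (tail_cv a b C); auto. }
  assert (L0 : Ccv (fun n => Cmul (Tn a b C n) (Sv n)) (Sv 0%nat)).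
  { eapply Ccv_ext; [|apply Ccv_const]. intro n. apply Eq. }
  pose proof (Ccv_unique _ _ _ L L0) as E.
  replace (Cdiv (Cmul (Gamma C) (Gamma (Csub C (Cadd a b)))) (Cmul (Gamma (Csub C a)) (Gamma (Csub C b)))) with (Sv 0%nat)
    by (rewrite <- E; ring).
  pose proof (HS 0%nat) as H0. rewrite Cnat_0 in H0. replace (Cadd C Cx0) with C in H0 by ring. exact H0.
Qed.

Definition G0 (a b d : Cx) :=
  Cdiv (Cmul (Gamma (Cadd d Cx1)) (Gamma (Csub (Cadd d Cx1) (Cadd a b))))
       (Cmul (Gamma (Csub (Cadd d Cx1) a)) (Gamma (Csub (Cadd d Cx1) b))).

Lemma Sfin_0 : forall a b c f, Sfin 0 a b c f = Cx1.
Proof. intros. unfold Sfin, F32_partial. simpl Csum. rewrite term0. ring. Qed.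

Lemma okp_f : forall f n, Re f < - INR n -> okp f n.
Proof.
  intros f n H i Hi E. assert (Re f + INR i = 0) by (change (Re (Cadd f (Cnat i)) = Re Cx0); rewrite E; reflexivity).
  assert (INR i <= INR n) by (apply le_INR; auto). lra.
Qed.

Lemma Hthm : forall n a b c d, notNonPosInt c -> notNonPosInt (Cadd d Cx1) ->
  notNonPosInt (Csub (Cadd d Cx1) a) -> notNonPosInt (Csub (Cadd d Cx1) b) ->
  INR n < Re d + 1 - Re a - Re b ->
  Ccv (Csum (Hterm a b c d n)) (Cmul (G0 a b d) (Sfin n a b c (Csub (Cadd a b) d))).
Proof.
  induction n; intros a b c d Hc Hd Ha Hb Hr.
  - rewrite Sfin_0. replace (Cmul (G0 a b d) Cx1) with (G0 a b d) by ring.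
    apply (Ccv_ext (Csum (h2 a b (Cadd d Cx1)))).
    { intro N. apply Csum_ext. intros j _. symmetry. apply Hterm_0; auto. }
    unfold G0. apply gauss; auto.
  - rewrite S_INR in Hr.
    assert (Hc1 : notNonPosInt (Cadd c Cx1)) by (apply nnpi_shift; auto).
    assert (Hd1 : notNonPosInt (Cadd (Cadd d Cx1) Cx1)) by (apply nnpi_shift; auto).
    assert (Ea : Csub (Cadd (Cadd d Cx1) Cx1) (Cadd a Cx1) = Csub (Cadd d Cx1) a) by ring.
    assert (Eb : Csub (Cadd (Cadd d Cx1) Cx1) (Cadd b Cx1) = Csub (Cadd d Cx1) b) by ring.
    pose proof (IHn a b c d Hc Hd Ha Hb ltac:(lra)) as I1.
    pose proof (IHn (Cadd a Cx1) (Cadd b Cx1) (Cadd c Cx1) (Cadd d Cx1) Hc1 Hd1 ltac:(rewrite Ea; auto) ltac:(rewrite Eb; auto)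
                 ltac:(unfold Cadd, Cx1; cbn [Re]; lra)) as I2.
    set (kap := Cdiv (Cmul a b) (Cmul (Cadd d Cx1) c)).
    assert (Step : forall N, Csum (Hterm a b c d (S n)) (S N) =
                   Cadd (Csum (Hterm a b c d n) (S N)) (Cmul kap (Csum (Hterm (Cadd a Cx1) (Cadd b Cx1) (Cadd c Cx1) (Cadd d Cx1) n) N))).
    { intro N. rewrite !Csum_shift. rewrite <- Csum_scal.
      rewrite (Csum_ext (fun j => Hterm a b c d (S n) (S j))
                 (fun j => Cadd (Hterm a b c d n (S j)) (Cmul kap (Hterm (Cadd a Cx1) (Cadd b Cx1) (Cadd c Cx1) (Cadd d Cx1) n j)))).
      2:{ intros j _. apply Hterm_rec; auto. }
      rewrite Csum_add. unfold Hterm at 1. unfold Hterm at 3. rewrite !term0. ring. }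
    apply Ccv_shift. eapply Ccv_ext. { intro N. symmetry. apply Step. }
    replace (Cmul (G0 a b d) (Sfin (S n) a b c (Csub (Cadd a b) d))) with
      (Cadd (Cmul (G0 a b d) (Sfin n a b c (Csub (Cadd a b) d)))
            (Cmul kap (Cmul (G0 (Cadd a Cx1) (Cadd b Cx1) (Cadd d Cx1))
                            (Sfin n (Cadd a Cx1) (Cadd b Cx1) (Cadd c Cx1) (Csub (Cadd (Cadd a Cx1) (Cadd b Cx1)) (Cadd d Cx1)))))).
    2:{ set (f := Csub (Cadd a b) d).
      replace (Csub (Cadd (Cadd a Cx1) (Cadd b Cx1)) (Cadd d Cx1)) with (Cadd f Cx1) by (unfold f; ring).
      assert (Hf : Re f < - INR n) by (unfold f, Csub, Cadd, Copp; cbn [Re]; lra).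
      rewrite Sfin_rec by (first [apply okp_f; lra | apply nnpi_okp; auto]).
      set (X := Csub (Csub d a) b).
      assert (HX : notNonPosInt X) by (apply repos_nnpi; unfold X, Csub, Cadd, Copp; cbn [Re]; pose proof (pos_INR n); lra).
      unfold G0.
      replace (Csub (Cadd (Cadd d Cx1) Cx1) (Cadd (Cadd a Cx1) (Cadd b Cx1))) with X by (unfold X; ring).
      replace (Csub (Cadd d Cx1) (Cadd a b)) with (Cadd X Cx1) by (unfold X; ring).
      rewrite Ea, Eb, (Gamma_succ (Cadd d Cx1) Hd), (Gamma_succ X HX).
      pose proof (proj2 (Gamma_spec _ Ha)). pose proof (proj2 (Gamma_spec _ Hb)).
      pose proof (nnpi_nz _ Hc). pose proof (nnpi_nz _ Hd). pose proof (nnpi_nz _ HX).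
      assert (f <> Cx0) by (intro E; rewrite E in Hf; simpl in Hf; pose proof (pos_INR n); lra).
      assert (Ef : f = Copp X) by (unfold f, X; ring).
      unfold kap. rewrite Ef in *. field. repeat split; auto. }
    apply Ccv_add. apply Ccv_shift'. exact I1. apply Ccv_mul. apply Ccv_const. exact I2.
Qed.

Lemma F32_neg : forall k a2 a3 b1 b2,
  F32 (Copp (Cnat k)) a2 a3 b1 b2 = Csum (F32_term (Copp (Cnat k)) a2 a3 b1 b2) (S k).
Proof.
  intros. unfold F32. apply Clim_eq. unfold F32_partial.
  apply (Ccv_eventually_const (Csum (F32_term (Copp (Cnat k)) a2 a3 b1 b2)) (S k)).
  intros n Hn. apply Csum_zero_tail; auto. intros j Hj. unfold F32_term. rewrite poch_neg by lia. unfold Cdiv. ring.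
Qed.

Lemma poch_neg_shift : forall f k,
  poch (Copp (Cadd f (Cnat k))) (S k) = Cmul (Cpown (Copp Cx1) (S k)) (Cmul f (poch (Cadd f Cx1) k)).
Proof.
  intros f k. induction k.
  - simpl. rewrite Cnat_0. ring.
  - rewrite poch_S_left.
    replace (Cadd (Copp (Cadd f (Cnat (S k)))) Cx1) with (Copp (Cadd f (Cnat k))) by (rewrite Cnat_S; ring).
    rewrite IHk. rewrite (poch_S (Cadd f Cx1) k). simpl Cpown. rewrite Cnat_S. ring.
Qed.

Theorem mainTheorem7 (k : nat) (a b c d : Cx)
  (hc : notNonPosInt c)
  (hd : notNonPosInt (Cadd d Cx1))
  (habd : notNonPosInt (Cadd (Csub (Cadd a b) d) Cx1))
  (hda : notNonPosInt (Cadd (Csub d a) Cx1))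
  (hdb : notNonPosInt (Cadd (Csub d b) Cx1))
  (hre : 0 < Re (Csub (Csub (Csub d a) b) (Cnat k))) :
  let e := Cadd (Csub (Cadd a b) d) Cx1 in
  Ccv (F32_partial a b (Cadd (Cadd c (Cnat k)) Cx1) (Cadd d Cx1) c)
    (Cmul
      (Cdiv
        (Cmul (Cmul (Cmul (Cpown (Copp Cx1) k) (Gamma (Cadd d Cx1)))
                    (Gamma (Csub (Csub (Csub d a) b) (Cnat k))))
              (poch e k))
        (Cmul (Cmul c (Gamma (Cadd (Csub d a) Cx1))) (Gamma (Cadd (Csub d b) Cx1))))
      (Cadd
        (Cmul (Cadd (Cmul a (Csub b c)) (Cmul c (Csub d b)))
              (F32 (Copp (Cnat k)) a b (Cadd c Cx1) e))
        (Cmul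
          (Cdiv (Cmul (Cmul (Cmul a b) (Csub c d)) (Cnat k))
                (Cmul (Cadd c Cx1) e))
          (F32 (Csub Cx1 (Cnat k)) (Cadd a Cx1) (Cadd b Cx1)
               (Cadd c (RtoC 2)) (Cadd e Cx1))))).
Proof.
  intro e. unfold e. clear e. set (f := Csub (Cadd a b) d).
  assert (Hre : Re d - Re a - Re b - INR k > 0) by (unfold Csub, Cadd, Copp, Cnat, RtoC in hre; cbn [Re] in hre; lra).
  assert (Ha : notNonPosInt (Csub (Cadd d Cx1) a)) by (replace (Csub (Cadd d Cx1) a) with (Cadd (Csub d a) Cx1) by ring; auto).
  assert (Hb : notNonPosInt (Csub (Cadd d Cx1) b)) by (replace (Csub (Cadd d Cx1) b) with (Cadd (Csub d b) Cx1) by ring; auto).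
  replace (Cadd (Cadd c (Cnat k)) Cx1) with (Cadd c (Cnat (S k))) by (rewrite Cnat_S; ring).
  pose proof (Hthm (S k) a b c d hc hd Ha Hb ltac:(rewrite S_INR; lra)) as H.
  fold f in H. unfold F32_partial. 
  match goal with |- Ccv _ ?R => replace R with (Cmul (G0 a b d) (Sfin (S k) a b c f)) end.
  { exact H. }
  assert (Hf : Re f < - INR k) by (unfold f, Csub, Cadd, Copp; cbn [Re]; lra).
  rewrite fin_id by (first [apply okp_f; lra | apply nnpi_okp; auto]).
  set (z := Copp (Cadd f (Cnat k))).
  assert (Hz : notNonPosInt z) by (apply repos_nnpi; unfold z, f, Csub, Cadd, Copp, Cnat, RtoC; cbn [Re]; lra).
  replace (Csub (Csub (Csub d a) b) (Cnat k)) with z by (unfold z, f; ring).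
  unfold G0. replace (Csub (Cadd d Cx1) (Cadd a b)) with (Cadd z (Cnat (S k))) by (unfold z, f; rewrite Cnat_S; ring).
  rewrite Gamma_add by auto. unfold z. rewrite poch_neg_shift. fold z.
  replace (Cadd (Csub d a) Cx1) with (Csub (Cadd d Cx1) a) by ring.
  replace (Cadd (Csub d b) Cx1) with (Csub (Cadd d Cx1) b) by ring.
  rewrite F32_neg. unfold Sfin, F32_partial.
  pose proof (proj2 (Gamma_spec _ Ha)). pose proof (proj2 (Gamma_spec _ Hb)). pose proof (proj2 (Gamma_spec _ hd)).
  pose proof (proj2 (Gamma_spec _ Hz)).
  pose proof (nnpi_nz _ hc). pose proof (nnpi_nz _ (nnpi_shift _ hc)). pose proof (nnpi_nz _ habd).
  assert (f <> Cx0) by (intro E; rewrite E in Hf; simpl in Hf; pose proof (pos_INR k); lra).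
  assert (Ed : d = Csub (Cadd a b) f) by (unfold f; ring).
  fold f in H6.
  set (g1 := Gamma (Csub (Cadd d Cx1) a)) in *. set (g2 := Gamma (Csub (Cadd d Cx1) b)) in *.
  set (g3 := Gamma (Cadd d Cx1)) in *. set (g4 := Gamma z) in *.
  clearbody g1 g2 g3 g4 z f. subst d.
  destruct k as [|k].
  - rewrite Cnat_0. simpl Csum. simpl Cpown. field. repeat split; auto.
  - replace (Csub Cx1 (Cnat (S k))) with (Copp (Cnat k)) by (rewrite Cnat_S; ring).
    replace (Cadd (Cadd f Cx1) Cx1) with (Cadd f (RtoC 2)) by (rewrite RtoC_2; ring).
    rewrite F32_neg. simpl Cpown. field. repeat split; auto.
Qed.
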